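(* Let $f:\mathbb{R}^n\to\mathbb{R}^n$ be smooth, $\varepsilon\ge 0$, $V\subseteq\mathbb{R}^n$ and $\Delta>0$ such that $R^{\Delta}_{f,\varepsilon}(V)\subseteq V$. Then for all $\Delta'\ge\Delta$, $$R_{f,\varepsilon}\big(R^{[0,\Delta']}_{f,\varepsilon}(V)\big)\subseteq R^{[0,\Delta']}_{f,\varepsilon}(V).$$
   Context: For $\varepsilon\ge 0$, an $\varepsilon$-solution of $\dot x=f(x)$ is a differentiable function $x:\mathbb{R}^{\ge0}\to\mathbb{R}^n$ with $\|f(x(t))-\dot x(t)\|\le\varepsilon$ for all $t\ge0$ (Euclidean norm). For $X\subseteq\mathbb{R}^n$, $T\subseteq\mathbb{R}^{\ge 0}$: $R^{T}_{f,\varepsilon}(X)=\{x(t)\mid t\in T,\ x\text{ an }\varepsilon\text{-solution with }x(0)\in X\}$; $R^{t}_{f,\varepsilon}(X)=R^{\{t\}}_{f,\varepsilon}(X)$; $R_{f,\varepsilon}(X)=R^{\mathbb{R}^{\ge0}}_{f,\varepsilon}(X)$. *)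

(* Defs.v *)
From Stdlib Require Import Reals Lra.
From Stdlib Require Vectors.Fin.
Open Scope R_scope.

Definition vec (n : nat) : Type := Fin.t n -> R.

Fixpoint sum_fin (n : nat) : (Fin.t n -> R) -> R :=
  match n with
  | O => fun _ => 0
  | S m => fun g => g Fin.F1 + sum_fin m (fun i => g (Fin.FS i))
  end.

Definition vsub {n : nat} (u v : vec n) : vec n := fun i => u i - v i.
Definition vadd {n : nat} (u v : vec n) : vec n := fun i => u i + v i.
Definition vscal {n : nat} (c : R) (u : vec n) : vec n := fun i => c * u i.

Definition vnorm {n : nat} (u : vec n) : R := sqrt (sum_fin n (fun i => (u i)^2)).

Definition e_basis {n : nat} (i : Fin.t n) : vec n :=
  fun j => if Fin.eq_dec i j then 1 else 0.

Definition vcontinuous {n : nat} (g : vec n -> R) : Prop :=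
  forall v eps, 0 < eps -> exists delta, 0 < delta /\
    forall w, vnorm (vsub w v) < delta -> Rabs (g w - g v) < eps.

Definition has_partial {n : nat} (g : vec n -> R) (i : Fin.t n) (v : vec n) (l : R) : Prop :=
  derivable_pt_lim (fun s => g (vadd v (vscal s (e_basis i)))) 0 l.

Fixpoint Ck {n : nat} (k : nat) (g : vec n -> R) : Prop :=
  vcontinuous g /\
  match k with
  | O => True
  | S k' => exists dg : Fin.t n -> vec n -> R,
      (forall i v, has_partial g i v (dg i v)) /\ (forall i, Ck k' (dg i))
  end.

Definition smooth {n : nat} (f : vec n -> vec n) : Prop :=
  forall (k : nat) (j : Fin.t n), Ck k (fun v => f v j).

Definition deriv_nonneg (y : R -> R) (t l : R) : Prop :=
  forall eps, 0 < eps -> exists delta, 0 < delta /\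
    forall h, h <> 0 -> 0 <= t + h -> Rabs h < delta ->
      Rabs ((y (t + h) - y t) / h - l) < eps.

(* x : R^{>=0} -> R^n (only values on [0,+oo) matter) is an eps-solution of x' = f(x) *)
Definition eps_solution {n : nat} (f : vec n -> vec n) (eps : R) (x : R -> vec n) : Prop :=
  exists dx : R -> vec n,
    (forall t, 0 <= t -> forall i, deriv_nonneg (fun s => x s i) t (dx t i)) /\
    (forall t, 0 <= t -> vnorm (vsub (f (x t)) (dx t)) <= eps).

Definition Reach {n : nat} (f : vec n -> vec n) (eps : R) (T : R -> Prop)
    (X : vec n -> Prop) : vec n -> Prop :=
  fun y => exists (x : R -> vec n) (t : R),
    0 <= t /\ T t /\ eps_solution f eps x /\ X (x 0) /\ y = x t.

(* Main.v *)
Require Import Defs.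
From Stdlib Require Import Reals.
From Stdlib Require Import Lra Psatz FunctionalExtensionality Classical.
From Stdlib Require Vectors.Fin.
Open Scope R_scope.


Lemma sum_fin_ext n (g h : Fin.t n -> R) : (forall i, g i = h i) -> sum_fin n g = sum_fin n h.
Proof. intro H. f_equal. now apply functional_extensionality. Qed.

Lemma sum_fin_plus n (g h : Fin.t n -> R) : sum_fin n (fun i => g i + h i) = sum_fin n g + sum_fin n h.
Proof. induction n; simpl. lra. rewrite IHn. lra. Qed.

Lemma sum_fin_scal n c (g : Fin.t n -> R) : sum_fin n (fun i => c * g i) = c * sum_fin n g.
Proof. induction n; simpl. lra. rewrite IHn. lra. Qed.

Lemma sum_fin_le n (g h : Fin.t n -> R) : (forall i, g i <= h i) -> sum_fin n g <= sum_fin n h.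
Proof. induction n; simpl; intros H. lra. specialize (IHn (fun i => g (Fin.FS i)) (fun i => h (Fin.FS i))).
  simpl in IHn. assert (H1 := H Fin.F1). assert (sum_fin n (fun i => g (Fin.FS i)) <= sum_fin n (fun i => h (Fin.FS i))) by (apply IHn; intro; apply H). lra. Qed.

Lemma sum_fin_nonneg n (g : Fin.t n -> R) : (forall i, 0 <= g i) -> 0 <= sum_fin n g.
Proof. intro H. assert (E: sum_fin n (fun _ => 0) = 0). { clear H g. induction n; simpl; lra. }
  rewrite <- E. now apply sum_fin_le. Qed.

Lemma sum_fin_const n c : sum_fin n (fun _ => c) = INR n * c.
Proof. induction n; simpl sum_fin. simpl; lra. rewrite IHn, S_INR. lra. Qed.

Lemma sum_fin_term n (g : Fin.t n -> R) i : (forall j, 0 <= g j) -> g i <= sum_fin n g.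
Proof. induction n. inversion i. intros H. pattern i; apply Fin.caseS'; simpl.
  - assert (0 <= sum_fin n (fun i => g (Fin.FS i))) by (apply sum_fin_nonneg; intro; apply H). lra.
  - intro j. assert (g (Fin.FS j) <= sum_fin n (fun i => g (Fin.FS i))) by (apply (IHn (fun i => g (Fin.FS i))); intro; apply H).
    assert (H1 := H Fin.F1). lra. Qed.

Lemma sum_fin_abs n (g : Fin.t n -> R) : Rabs (sum_fin n g) <= sum_fin n (fun i => Rabs (g i)).
Proof. induction n; simpl. rewrite Rabs_R0; lra.
  eapply Rle_trans. apply Rabs_triang. specialize (IHn (fun i => g (Fin.FS i))). lra. Qed.

Lemma sum_fin_zero_ex n (g : Fin.t n -> R) : (forall i, 0 = g i) -> sum_fin n g = 0.
Proof. induction n; simpl; intro H. lra. rewrite <- H. rewrite IHn. lra. intro; apply H. Qed.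

Lemma CS n (a b : Fin.t n -> R) :
  (sum_fin n (fun i => a i * b i))^2 <= sum_fin n (fun i => (a i)^2) * sum_fin n (fun i => (b i)^2).
Proof.
  set (A := sum_fin n (fun i => a i * b i)).
  set (P := sum_fin n (fun i => (a i)^2)).
  set (Q := sum_fin n (fun i => (b i)^2)).
  assert (Hq : forall l, 0 <= P + 2 * l * A + l^2 * Q).
  { intro l. assert (E : sum_fin n (fun i => (a i + l * b i)^2) = P + 2 * l * A + l^2 * Q).
    { unfold P, A, Q. rewrite <- !sum_fin_scal.
      rewrite <- !sum_fin_plus. apply sum_fin_ext. intro; ring. }
    rewrite <- E. apply sum_fin_nonneg. intro; apply pow2_ge_0. }
  assert (HP: 0 <= P) by (apply sum_fin_nonneg; intro; apply pow2_ge_0).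
  assert (HQ: 0 <= Q) by (apply sum_fin_nonneg; intro; apply pow2_ge_0).
  destruct (Req_dec Q 0) as [Q0|Q0].
  - rewrite Q0 in *. destruct (Req_dec A 0) as [A0|A0]. rewrite A0; nra.
    exfalso. specialize (Hq (- (P+1)/(2*A))).
    assert (E: 2 * (- (P + 1) / (2 * A)) * A = - (P+1)) by (field; auto). rewrite E in Hq. lra.
  - specialize (Hq (- A / Q)).
    assert (E: P + 2 * (- A / Q) * A + (- A / Q) ^ 2 * Q = P - A^2/Q) by (field; auto).
    rewrite E in Hq. assert (0 < Q) by lra.
    assert (A^2/Q <= P) by lra. apply Rmult_le_compat_r with (r:=Q) in H0; [|lra].
    replace (A ^ 2 / Q * Q) with (A^2) in H0 by (field; auto). lra.
Qed.

Lemma vnorm_sq n (u : vec n) : (vnorm u)^2 = sum_fin n (fun i => (u i)^2).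
Proof. unfold vnorm. apply pow2_sqrt. apply sum_fin_nonneg; intro; apply pow2_ge_0. Qed.

Lemma vnorm_nonneg n (u : vec n) : 0 <= vnorm u.
Proof. apply sqrt_pos. Qed.

Lemma vnorm_le_sq n (u : vec n) r : 0 <= r -> sum_fin n (fun i => (u i)^2) <= r^2 -> vnorm u <= r.
Proof. intros. unfold vnorm. rewrite <- (sqrt_pow2 r) by auto. apply sqrt_le_1_alt. auto. Qed.

Lemma vnorm_triang n (u v : vec n) : vnorm (fun i => u i + v i) <= vnorm u + vnorm v.
Proof. apply vnorm_le_sq. pose proof (vnorm_nonneg _ u); pose proof (vnorm_nonneg _ v); lra.
  assert (E: sum_fin n (fun i => (u i + v i)^2) = sum_fin n (fun i => (u i)^2) + 2 * sum_fin n (fun i => u i * v i) + sum_fin n (fun i => (v i)^2)).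
  { rewrite <- sum_fin_scal, <- !sum_fin_plus. apply sum_fin_ext; intro; ring. }
  rewrite E, <- !vnorm_sq. pose proof (CS n u v). rewrite <- !vnorm_sq in H.
  pose proof (vnorm_nonneg _ u); pose proof (vnorm_nonneg _ v).
  assert (sum_fin n (fun i => u i * v i) <= vnorm u * vnorm v).
  { set (s:= sum_fin n (fun i => u i * v i)) in *. assert (s^2 <= (vnorm u * vnorm v)^2) by nra.
    assert (0 <= vnorm u * vnorm v) by nra. destruct (Rle_dec s (vnorm u * vnorm v)); auto. nra. }
  nra. Qed.

Lemma vnorm_scal n c (u : vec n) : vnorm (fun i => c * u i) = Rabs c * vnorm u.
Proof. unfold vnorm.
  rewrite (sum_fin_ext n _ (fun i => c^2 * (u i)^2)) by (intro; ring).
  rewrite sum_fin_scal. rewrite sqrt_mult_alt by apply pow2_ge_0.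
  f_equal. rewrite <- sqrt_Rsqr_abs. f_equal. unfold Rsqr; ring. Qed.

Lemma vnorm_coord n (u : vec n) i : Rabs (u i) <= vnorm u.
Proof. rewrite <- (sqrt_pow2 (Rabs (u i))) by apply Rabs_pos. apply sqrt_le_1_alt.
  rewrite RPow_abs, Rabs_pos_eq by (apply pow2_ge_0). apply (sum_fin_term n (fun i => u i ^2)). intro; apply pow2_ge_0. Qed.

Lemma vnorm_le_sum n (u : vec n) : vnorm u <= sum_fin n (fun i => Rabs (u i)).
Proof. apply vnorm_le_sq. apply sum_fin_nonneg; intro; apply Rabs_pos.
  induction n; cbn [sum_fin]. lra. specialize (IHn (fun i => u (Fin.FS i))). cbv beta in IHn.
  assert (0 <= sum_fin n (fun i => Rabs (u (Fin.FS i)))) by (apply sum_fin_nonneg; intro; apply Rabs_pos).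
  pose proof (Rabs_pos (u Fin.F1)). assert (u Fin.F1 ^2 = Rabs (u Fin.F1) ^ 2) by (rewrite <- Rsqr_pow2, <- Rsqr_pow2; apply Rsqr_abs). nra. Qed.

Lemma sum_abs_le n (u : vec n) : sum_fin n (fun i => Rabs (u i)) <= INR n * vnorm u.
Proof. rewrite <- sum_fin_const. apply sum_fin_le. intro; apply vnorm_coord. Qed.

Lemma vnorm_opp n (u : vec n) : vnorm (fun i => - u i) = vnorm u.
Proof. unfold vnorm. f_equal. apply sum_fin_ext; intro; ring. Qed.

Lemma vnorm_ext n (u v : vec n) : (forall i, u i = v i) -> vnorm u = vnorm v.
Proof. intro H. f_equal. now apply functional_extensionality. Qed.

Lemma vnorm_sub_sym n (u v : vec n) : vnorm (fun i => u i - v i) = vnorm (fun i => v i - u i).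
Proof. rewrite <- vnorm_opp. apply vnorm_ext; intro; ring. Qed.

Lemma parallelogram n (u v : vec n) :
  (vnorm (fun i => u i + v i))^2 + (vnorm (fun i => u i - v i))^2 = 2 * (vnorm u)^2 + 2 * (vnorm v)^2.
Proof. rewrite !vnorm_sq. rewrite <- !sum_fin_scal, <- !sum_fin_plus. apply sum_fin_ext; intro; ring. Qed.

Lemma vnorm_pos_of_neq n (a b : vec n) : a <> b -> 0 < vnorm (fun i => a i - b i).
Proof. intro H. destruct (classic (exists i, a i <> b i)) as [[i Hi]|Hn].
  - eapply Rlt_le_trans; [| apply (vnorm_coord _ _ i)]. apply Rabs_pos_lt. lra.
  - exfalso. apply H. apply functional_extensionality. intro i. apply NNPP. intro; apply Hn; eauto. Qed.

Lemma vnorm_tri3 n (u v w : vec n) : vnorm (fun i => u i - w i) <= vnorm (fun i => u i - v i) + vnorm (fun i => v i - w i).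
Proof. eapply Rle_trans; [| apply vnorm_triang]. right. apply vnorm_ext; intro; ring. Qed.

Lemma ball_convex n (a b p : vec n) r lam : 0 <= lam <= 1 ->
  vnorm (fun i => a i - p i) <= r -> vnorm (fun i => b i - p i) <= r ->
  vnorm (fun i => a i + lam * (b i - a i) - p i) <= r.
Proof. intros Hl Ha Hb.
  assert (E: vnorm (fun i => a i + lam * (b i - a i) - p i) = vnorm (fun i => (1 - lam) * (a i - p i) + lam * (b i - p i))) by (apply vnorm_ext; intro; ring).
  rewrite E. eapply Rle_trans. apply vnorm_triang. rewrite !vnorm_scal, !Rabs_pos_eq by lra. nra. Qed.

Definition rd (g : R -> R) c l := forall e, 0 < e -> exists d, 0 < d /\
  forall h, 0 < h < d -> Rabs ((g (c + h) - g c) / h - l) < e.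
Definition ld (g : R -> R) c l := forall e, 0 < e -> exists d, 0 < d /\
  forall h, - d < h < 0 -> Rabs ((g (c + h) - g c) / h - l) < e.

Lemma dpl_rd g c l : derivable_pt_lim g c l -> rd g c l.
Proof. intros H e He. destruct (H e He) as [d Hd]. exists d; split. apply cond_pos.
  intros h Hh. apply Hd. lra. rewrite Rabs_pos_eq; lra. Qed.

Lemma dpl_ld g c l : derivable_pt_lim g c l -> ld g c l.
Proof. intros H e He. destruct (H e He) as [d Hd]. exists d; split. apply cond_pos.
  intros h Hh. apply Hd. lra. rewrite Rabs_left; lra. Qed.

Lemma rd_ld_dpl g c l : rd g c l -> ld g c l -> derivable_pt_lim g c l.
Proof. intros H1 H2 e He. destruct (H1 e He) as [d1 [Hd1 P1]]. destruct (H2 e He) as [d2 [Hd2 P2]].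
  assert (0 < Rmin d1 d2) by (apply Rmin_pos; auto). exists (mkposreal _ H). simpl. intros h Hh Ha.
  pose proof (Rmin_l d1 d2); pose proof (Rmin_r d1 d2).
  destruct (Rlt_or_le 0 h). apply P1. rewrite Rabs_pos_eq in Ha; lra.
  apply P2. rewrite Rabs_left1 in Ha; lra. Qed.

Lemma dn_of_dpl g c l : 0 < c -> derivable_pt_lim g c l -> deriv_nonneg g c l.
Proof. intros Hc H e He. destruct (H e He) as [d Hd]. exists d; split. apply cond_pos.
  intros h Hh _ Ha. apply Hd; auto. Qed.

Lemma dpl_of_dn g c l : 0 < c -> deriv_nonneg g c l -> derivable_pt_lim g c l.
Proof. intros Hc H e He. destruct (H e He) as [d [Hd P]].
  assert (0 < Rmin d c) by (apply Rmin_pos; auto). exists (mkposreal _ H0). simpl. intros h Hh Ha.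
  pose proof (Rmin_l d c); pose proof (Rmin_r d c).
  apply P; auto. destruct (Rle_dec 0 h). lra. rewrite Rabs_left in Ha; lra. lra. Qed.

Lemma dn_of_rd0 g l : rd g 0 l -> deriv_nonneg g 0 l.
Proof. intros H e He. destruct (H e He) as [d [Hd P]]. exists d; split; auto.
  intros h Hh H0 Ha. apply P. rewrite Rabs_pos_eq in Ha; lra. Qed.

Lemma rd_of_dn g c l : 0 <= c -> deriv_nonneg g c l -> rd g c l.
Proof. intros Hc H e He. destruct (H e He) as [d [Hd P]]. exists d; split; auto.
  intros h Hh. apply P; try lra. rewrite Rabs_pos_eq; lra. Qed.

Lemma dn_of_rdld g c l : 0 < c -> rd g c l -> ld g c l -> deriv_nonneg g c l.
Proof. intros. apply dn_of_dpl; auto. apply rd_ld_dpl; auto. Qed.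

Lemma rd_ext g g' c l eta : 0 < eta -> (forall h, 0 <= h < eta -> g (c + h) = g' (c + h)) -> rd g' c l -> rd g c l.
Proof. intros He E H e He'. destruct (H e He') as [d [Hd P]]. exists (Rmin d eta); split. apply Rmin_pos; auto.
  intros h Hh. pose proof (Rmin_l d eta); pose proof (Rmin_r d eta).
  rewrite E by lra. replace c with (c + 0) at 2 by ring. rewrite E by lra. replace (c+0) with c by ring. apply P. lra. Qed.

Lemma ld_ext g g' c l eta : 0 < eta -> (forall h, - eta < h <= 0 -> g (c + h) = g' (c + h)) -> ld g' c l -> ld g c l.
Proof. intros He E H e He'. destruct (H e He') as [d [Hd P]]. exists (Rmin d eta); split. apply Rmin_pos; auto.
  intros h Hh. pose proof (Rmin_l d eta); pose proof (Rmin_r d eta).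
  rewrite E by lra. replace c with (c + 0) at 2 by ring. rewrite E by lra. replace (c+0) with c by ring. apply P. lra. Qed.

Lemma dpl_ext g g' c l eta : 0 < eta -> (forall h, - eta < h < eta -> g (c + h) = g' (c + h)) -> derivable_pt_lim g' c l -> derivable_pt_lim g c l.
Proof. intros He E H. apply rd_ld_dpl.
  apply rd_ext with g' eta; auto. intros; apply E; lra. now apply dpl_rd.
  apply ld_ext with g' eta; auto. intros; apply E; lra. now apply dpl_ld. Qed.

Definition ext_r (g : R -> R) c l := fun u => if Rle_dec c u then g u else g c + l * (u - c).
Definition ext_l (g : R -> R) c l := fun u => if Rle_dec u c then g u else g c + l * (u - c).

Lemma ext_r_dpl g c l : rd g c l -> derivable_pt_lim (ext_r g c l) c l.
Proof. intro H. apply rd_ld_dpl.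
  - apply rd_ext with g 1. lra. intros h Hh. unfold ext_r. destruct (Rle_dec c (c+h)); auto; lra. auto.
  - intros e He. exists 1; split. lra. intros h Hh. unfold ext_r.
    destruct (Rle_dec c (c+h)). lra. destruct (Rle_dec c c); [|lra].
    replace ((g c + l * (c + h - c) - g c) / h - l) with 0 by (field; lra). rewrite Rabs_R0; lra. Qed.

Lemma ext_l_dpl g c l : ld g c l -> derivable_pt_lim (ext_l g c l) c l.
Proof. intro H. apply rd_ld_dpl.
  - intros e He. exists 1; split. lra. intros h Hh. unfold ext_l.
    destruct (Rle_dec (c+h) c). lra. destruct (Rle_dec c c); [|lra].
    replace ((g c + l * (c + h - c) - g c) / h - l) with 0 by (field; lra). rewrite Rabs_R0; lra.
  - apply ld_ext with g 1. lra. intros h Hh. unfold ext_l. destruct (Rle_dec (c+h) c); auto; lra. auto. Qed.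

Lemma MVT_bound g g' a b B : a <= b -> (forall c, a <= c <= b -> derivable_pt_lim g c (g' c)) ->
  (forall c, a <= c <= b -> Rabs (g' c) <= B) -> Rabs (g b - g a) <= B * (b - a).
Proof. intros Hab Hd HB. destruct (Req_dec a b). subst. replace (g b - g b) with 0 by ring. rewrite Rabs_R0.
  assert (0 <= B). { eapply Rle_trans. apply Rabs_pos. apply (HB b). lra. } lra.
  destruct (MVT_cor2 g g' a b) as [c [E Hc]]. lra. auto. rewrite E, Rabs_mult, (Rabs_pos_eq (b-a)) by lra.
  apply Rmult_le_compat_r. lra. apply HB; lra. Qed.

Lemma dpl_shift g c t l : derivable_pt_lim g (c - t) l -> derivable_pt_lim (fun u => g (u - t)) c l.
Proof. intros H e He. destruct (H e He) as [d Hd]. exists d. intros h Hh Ha.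
  replace (c + h - t) with (c - t + h) by ring. auto. Qed.

Lemma rd_shift g c t l : rd g (c - t) l -> rd (fun u => g (u - t)) c l.
Proof. intros H e He. destruct (H e He) as [d Hd]. exists d. split. tauto. intros h Hh.
  replace (c + h - t) with (c - t + h) by ring. apply Hd; auto. Qed.

Lemma ld_shift g c t l : ld g (c - t) l -> ld (fun u => g (u - t)) c l.
Proof. intros H e He. destruct (H e He) as [d Hd]. exists d. split. tauto. intros h Hh.
  replace (c + h - t) with (c - t + h) by ring. apply Hd; auto. Qed.

Lemma fin_choice_pos n (P : Fin.t n -> R -> Prop) :
  (forall i d d', 0 < d' <= d -> P i d -> P i d') -> (forall i, exists d, 0 < d /\ P i d) ->
  exists d, 0 < d /\ forall i, P i d.
Proof. induction n; intros Hm H.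
  - exists 1. split. lra. intro i; inversion i.
  - destruct (IHn (fun i => P (Fin.FS i))) as [d1 [Hd1 P1]]. intros; eapply Hm; eauto. intro; apply H.
    destruct (H Fin.F1) as [d0 [Hd0 P0]]. exists (Rmin d0 d1). split. apply Rmin_pos; auto.
    pose proof (Rmin_l d0 d1); pose proof (Rmin_r d0 d1). assert (0 < Rmin d0 d1) by (apply Rmin_pos; auto).
    intro i. pattern i; apply Fin.caseS'. eapply Hm; [|eauto]; lra. intro j; eapply Hm; [|apply P1]; lra. Qed.

Lemma fin_choice_bound n (P : Fin.t n -> R -> Prop) :
  (forall i L L', L <= L' -> P i L -> P i L') -> (forall i, exists L, P i L) ->
  exists L, 0 <= L /\ forall i, P i L.
Proof. induction n; intros Hm H.
  - exists 0. split. lra. intro i; inversion i.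
  - destruct (IHn (fun i => P (Fin.FS i))) as [d1 [Hd1 P1]]. intros; eapply Hm; eauto. intro; apply H.
    destruct (H Fin.F1) as [d0 P0]. exists (Rmax d0 d1). split. eapply Rle_trans; [|apply Rmax_r]; auto.
    pose proof (Rmax_l d0 d1); pose proof (Rmax_r d0 d1).
    intro i. pattern i; apply Fin.caseS'. eapply Hm; [|eauto]; lra. intro j; eapply Hm; [|apply P1]; lra. Qed.

Definition cons_v {m} (a : R) (w : vec m) : vec (S m) := fun j => Fin.caseS' j (fun _ => R) a w.

Lemma cons_v_eta m (v : vec (S m)) : v = cons_v (v Fin.F1) (fun j => v (Fin.FS j)).
Proof. apply functional_extensionality. intro j. pattern j; apply Fin.caseS'; reflexivity. Qed.

Lemma e_basis_FS m (i j : Fin.t m) : @e_basis (S m) (Fin.FS i) (Fin.FS j) = e_basis i j.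
Proof. unfold e_basis. destruct (Fin.eq_dec (Fin.FS i) (Fin.FS j)) as [E|E]; destruct (Fin.eq_dec i j) as [E'|E']; auto.
  apply Fin.FS_inj in E. contradiction. subst. contradiction. Qed.

Lemma e_basis_FS1 m (i : Fin.t m) : @e_basis (S m) (Fin.FS i) Fin.F1 = 0.
Proof. unfold e_basis. destruct (Fin.eq_dec (Fin.FS i) Fin.F1) as [E|E]; auto. inversion E. Qed.

Lemma e_basis_1FS m (i : Fin.t m) : @e_basis (S m) Fin.F1 (Fin.FS i) = 0.
Proof. unfold e_basis. destruct (Fin.eq_dec Fin.F1 (Fin.FS i)) as [E|E]; auto. inversion E. Qed.

Lemma e_basis_11 m : @e_basis (S m) Fin.F1 Fin.F1 = 1.
Proof. unfold e_basis. destruct (Fin.eq_dec Fin.F1 Fin.F1) as [E|E]; auto. contradiction. Qed.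

Definition inbox {n} (u v w : vec n) := forall j, Rmin (u j) (v j) <= w j <= Rmax (u j) (v j).

Lemma dpl_from0 (G : R -> R) s l : derivable_pt_lim (fun r => G (s + r)) 0 l -> derivable_pt_lim G s l.
Proof. intros H e He. destruct (H e He) as [d Hd]. exists d. intros h Hh Ha. specialize (Hd h Hh Ha).
  replace (s + (0 + h)) with (s + h) in Hd by ring. replace (s + 0) with s in Hd by ring. auto. Qed.

Lemma coord_lip n (g : vec n -> R) (dg : Fin.t n -> vec n -> R) B (u v : vec n) :
  (forall i w, has_partial g i w (dg i w)) -> (forall i w, inbox u v w -> Rabs (dg i w) <= B) ->
  Rabs (g v - g u) <= B * sum_fin n (fun i => Rabs (v i - u i)).
Proof.
  revert g dg u v. induction n; intros g dg u v Hp HB.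
  - assert (v = u) by (apply functional_extensionality; intro i; inversion i). subst.
    simpl. replace (g u - g u) with 0 by ring. rewrite Rabs_R0. lra.
  - set (w1 := cons_v (v Fin.F1) (fun j => u (Fin.FS j))).
    assert (Hu : u = cons_v (u Fin.F1) (fun j => u (Fin.FS j))) by apply cons_v_eta.
    assert (B0 : 0 <= B). { eapply Rle_trans. apply Rabs_pos. apply (HB Fin.F1 u). intro j. split. apply Rmin_l. apply Rmax_l. }
    assert (S1 : Rabs (g w1 - g u) <= B * Rabs (v Fin.F1 - u Fin.F1)).
    { set (G := fun s => g (fun j => u j + s * e_basis Fin.F1 j)).
      assert (EG0 : G 0 = g u). { unfold G. f_equal. apply functional_extensionality; intro; ring. }
      assert (EG1 : G (v Fin.F1 - u Fin.F1) = g w1).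
      { unfold G, w1. f_equal. apply functional_extensionality; intro j. pattern j; apply Fin.caseS'.
        simpl. rewrite e_basis_11. ring. intro k. simpl. rewrite e_basis_1FS. ring. }
      assert (DG : forall s, derivable_pt_lim G s (dg Fin.F1 (fun j => u j + s * e_basis Fin.F1 j))).
      { intro s. apply dpl_from0. specialize (Hp Fin.F1 (fun j => u j + s * e_basis Fin.F1 j)).
        unfold has_partial in Hp. unfold G. 
        assert (E: (fun r => g (fun j => u j + (s + r) * e_basis Fin.F1 j)) = (fun s0 : R => g (vadd (fun j => u j + s * e_basis Fin.F1 j) (vscal s0 (e_basis Fin.F1))))).
        { apply functional_extensionality; intro r. f_equal. apply functional_extensionality; intro j. unfold vadd, vscal. ring. }
        rewrite E. auto. }
      assert (Hbox : forall s, Rmin 0 (v Fin.F1 - u Fin.F1) <= s <= Rmax 0 (v Fin.F1 - u Fin.F1) -> inbox u v (fun j => u j + s * e_basis Fin.F1 j)).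
      { intros s Hs j. revert Hs. pattern j; apply Fin.caseS'.
        - rewrite e_basis_11. unfold Rmin, Rmax. repeat destruct Rle_dec; intros; lra.
        - intros k Hs. rewrite e_basis_1FS. unfold Rmin, Rmax. repeat destruct Rle_dec; lra. }
      rewrite <- EG0, <- EG1. destruct (Rle_dec 0 (v Fin.F1 - u Fin.F1)).
      + rewrite (Rabs_pos_eq (v Fin.F1 - u Fin.F1)) by auto. replace (B * (v Fin.F1 - u Fin.F1)) with (B * ((v Fin.F1 - u Fin.F1) - 0)) by ring.
        apply MVT_bound with (g' := fun s => dg Fin.F1 (fun j => u j + s * e_basis Fin.F1 j)); auto.
        intros c Hc. apply HB. apply Hbox. unfold Rmin, Rmax. repeat destruct Rle_dec; lra.
      + rewrite Rabs_minus_sym, (Rabs_left (v Fin.F1 - u Fin.F1)) by lra. replace (- (v Fin.F1 - u Fin.F1)) with (0 - (v Fin.F1 - u Fin.F1)) by ring.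
        apply MVT_bound with (g' := fun s => dg Fin.F1 (fun j => u j + s * e_basis Fin.F1 j)); auto. lra.
        intros c Hc. apply HB. apply Hbox. unfold Rmin, Rmax. repeat destruct Rle_dec; lra. }
    set (g' := fun w' : vec n => g (cons_v (v Fin.F1) w')).
    set (dg' := fun i (w' : vec n) => dg (Fin.FS i) (cons_v (v Fin.F1) w')).
    assert (S2 : Rabs (g' (fun j => v (Fin.FS j)) - g' (fun j => u (Fin.FS j))) <= B * sum_fin n (fun i => Rabs (v (Fin.FS i) - u (Fin.FS i)))).
    { apply IHn with dg'.
      - intros i w'. unfold has_partial, g', dg'. specialize (Hp (Fin.FS i) (cons_v (v Fin.F1) w')). unfold has_partial in Hp.
        assert (E: (fun s => g (cons_v (v Fin.F1) (vadd w' (vscal s (e_basis i))))) = (fun s => g (vadd (cons_v (v Fin.F1) w') (vscal s (e_basis (Fin.FS i)))))).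
        { apply functional_extensionality; intro s. f_equal. apply functional_extensionality; intro j. pattern j; apply Fin.caseS'.
          unfold vadd, vscal, cons_v; simpl. rewrite e_basis_FS1. ring. intro k. unfold vadd, vscal, cons_v; simpl. rewrite e_basis_FS. ring. }
        rewrite E; auto.
      - intros i w' Hb. unfold dg'. apply HB. intro j. pattern j; apply Fin.caseS'.
        unfold cons_v; simpl. unfold Rmin, Rmax. repeat destruct Rle_dec; lra.
        intro k. unfold cons_v; simpl. apply Hb. }
    assert (Ev : g v = g' (fun j => v (Fin.FS j))). { unfold g'. f_equal. apply cons_v_eta. }
    assert (Ew : g w1 = g' (fun j => u (Fin.FS j))). { reflexivity. }
    rewrite Ev in *. rewrite Ew in S1. cbn [sum_fin].
    replace (g' (fun j => v (Fin.FS j)) - g u) with ((g' (fun j => v (Fin.FS j)) - g' (fun j => u (Fin.FS j))) + (g' (fun j => u (Fin.FS j)) - g u)) by ring.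
    eapply Rle_trans. apply Rabs_triang. lra.
Qed.

Lemma box_sq a b w p : Rmin a b <= w <= Rmax a b -> (w - p)^2 <= (a - p)^2 + (b - p)^2.
Proof. unfold Rmin, Rmax. destruct Rle_dec; intros.
  - pose proof (pow2_ge_0 (a-p)); pose proof (pow2_ge_0 (b-p)). destruct (Rle_dec 0 (w - p)).
    assert (0 <= w - p <= b - p) by lra. nra. assert (a - p <= w - p < 0) by lra. nra.
  - pose proof (pow2_ge_0 (a-p)); pose proof (pow2_ge_0 (b-p)). destruct (Rle_dec 0 (w - p)).
    assert (0 <= w - p <= a - p) by lra. nra. assert (b - p <= w - p < 0) by lra. nra. Qed.

Lemma scalar_lip n (g : vec n -> R) (p : vec n) : Ck 1 g ->
  exists r, 0 < r /\ exists B, forall u v, vnorm (fun i => u i - p i) <= r -> vnorm (fun i => v i - p i) <= r ->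
    Rabs (g u - g v) <= B * vnorm (fun i => u i - v i).
Proof.
  intros [_ [dg [Hp Hc]]].
  destruct (fin_choice_pos n (fun i d => forall w, vnorm (fun k => w k - p k) < d -> Rabs (dg i w) <= Rabs (dg i p) + 1)) as [d [Hd Pd]].
  { intros i d0 d' Hd' H w Hw. apply H. lra. }
  { intro i. destruct (Hc i) as [Hci _]. destruct (Hci p 1) as [d0 [Hd0 P0]]. lra. exists d0; split; auto.
    intros w Hw. specialize (P0 w Hw). pose proof (Rabs_triang_inv (dg i w) (dg i p)). lra. }
  destruct (fin_choice_bound n (fun i B => Rabs (dg i p) + 1 <= B)) as [B [HB0 PB]].
  { intros; lra. } { intro i; exists (Rabs (dg i p) + 1); lra. }
  exists (d/2). split. lra. exists (B * INR n). intros u v Hu Hv.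
  rewrite Rabs_minus_sym. eapply Rle_trans. apply coord_lip with (dg := dg) (B := B). auto.
  - intros i w Hw. eapply Rle_trans; [|apply (PB i)]. apply Pd.
    assert (vnorm (fun k => w k - p k) <= sqrt ((d/2)^2 + (d/2)^2)).
    { unfold vnorm at 1. apply sqrt_le_1_alt.
      eapply Rle_trans. apply sum_fin_le with (h := fun k => (u k - p k)^2 + (v k - p k)^2). intro k. apply box_sq, Hw.
      rewrite sum_fin_plus. rewrite <- !vnorm_sq. pose proof (vnorm_nonneg _ (fun i => u i - p i)). pose proof (vnorm_nonneg _ (fun i => v i - p i)).
      assert (vnorm (fun i => u i - p i) ^2 <= (d/2)^2) by (apply pow_incr; lra).
      assert (vnorm (fun i => v i - p i) ^2 <= (d/2)^2) by (apply pow_incr; lra). lra. }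
    eapply Rle_lt_trans. apply H. replace d with (sqrt (d^2)) at 3 by (apply sqrt_pow2; lra). apply sqrt_lt_1_alt. split; nra.
  - rewrite Rmult_assoc. apply Rmult_le_compat_l. lra. rewrite vnorm_sub_sym. apply sum_abs_le.
Qed.

Lemma f_lip n (f : vec n -> vec n) (p : vec n) : smooth f ->
  exists r L, 0 < r /\ 0 <= L /\ forall u v, vnorm (fun i => u i - p i) <= r -> vnorm (fun i => v i - p i) <= r ->
    vnorm (fun j => f u j - f v j) <= L * vnorm (fun i => u i - v i).
Proof.
  intro Hs.
  destruct (fin_choice_pos n (fun j r => exists B, forall u v, vnorm (fun i => u i - p i) <= r -> vnorm (fun i => v i - p i) <= r ->
    Rabs (f u j - f v j) <= B * vnorm (fun i => u i - v i))) as [r [Hr Pr]].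
  { intros j d d' Hd [B HB]. exists B. intros u v Hu Hv. apply HB; lra. }
  { intro j. apply (scalar_lip n (fun v => f v j) p). apply Hs. }
  destruct (fin_choice_bound n (fun j B => forall u v, vnorm (fun i => u i - p i) <= r -> vnorm (fun i => v i - p i) <= r ->
    Rabs (f u j - f v j) <= B * vnorm (fun i => u i - v i))) as [B [HB0 PB]].
  { intros j L L' HL H u v Hu Hv. eapply Rle_trans. apply H; auto. apply Rmult_le_compat_r. apply vnorm_nonneg. auto. }
  { intro j. apply Pr. }
  exists r, (INR n * B). split; auto. split. apply Rmult_le_pos; auto. apply pos_INR.
  intros u v Hu Hv. eapply Rle_trans. apply vnorm_le_sum.
  eapply Rle_trans. apply sum_fin_le with (h := fun _ => B * vnorm (fun i => u i - v i)). intro j. apply PB; auto.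
  rewrite sum_fin_const. lra.
Qed.

Definition pw (b s : R) := if Rle_dec s 0 then 0 else exp (b * ln s).
Definition Hw (b s : R) := 1 - (1 - pw b s)^2.
Definition dHw (b s : R) := 2 * (1 - pw b s) * (b * pw b s / s).

Lemma pw_nonneg b s : 0 <= pw b s.
Proof. unfold pw. destruct Rle_dec. lra. left; apply exp_pos. Qed.

Lemma pw_le1 b s : 0 < b -> s <= 1 -> pw b s <= 1.
Proof. intros Hb Hs. unfold pw. destruct Rle_dec. lra. rewrite <- exp_0.
  destruct (Req_dec s 1). subst. rewrite ln_1, Rmult_0_r. lra.
  left. apply exp_increasing. assert (ln s < 0). { rewrite <- ln_1. apply ln_increasing; lra. } nra. Qed.

Lemma pw_pos b s : 0 < s -> 0 < pw b s.
Proof. intros. unfold pw. destruct Rle_dec. lra. apply exp_pos. Qed.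

Lemma pw_1 b : pw b 1 = 1.
Proof. unfold pw. destruct Rle_dec. lra. rewrite ln_1, Rmult_0_r, exp_0. auto. Qed.

Lemma pw_0 b : pw b 0 = 0.
Proof. unfold pw. destruct Rle_dec. auto. lra. Qed.

Lemma pw_small b e : 0 < b -> 0 < e -> exists eta, 0 < eta /\ forall s, s < eta -> pw b s < e.
Proof. intros Hb He. exists (exp (ln e / b)). split. apply exp_pos. intros s Hs. unfold pw. destruct Rle_dec. lra.
  rewrite <- (exp_ln e) by auto. apply exp_increasing.
  assert (ln s < ln e / b). { rewrite <- (ln_exp (ln e / b)). apply ln_increasing; lra. }
  apply Rmult_lt_compat_l with (r := b) in H; auto. replace (b * (ln e / b)) with (ln e) in H by (field; lra). auto. Qed.

Lemma dpl_affine c d x : derivable_pt_lim (fun u => c * u + d) x c.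
Proof. intros e He. exists (mkposreal 1 Rlt_0_1). intros h Hh _.
  replace ((c * (x + h) + d - (c * x + d)) / h - c) with 0 by (field; auto). rewrite Rabs_R0; auto. Qed.

Lemma pw_deriv b s : 0 < s -> derivable_pt_lim (pw b) s (b * pw b s / s).
Proof. intro Hs. apply dpl_ext with (g' := fun s => exp (b * ln s)) (eta := s); auto.
  intros h Hh. unfold pw. destruct Rle_dec; auto. lra.
  assert (E: b * pw b s / s = (b * / s) * exp (b * ln s)). { unfold pw. destruct Rle_dec. lra. field. lra. }
  rewrite E. change (fun s0 => exp (b * ln s0)) with (comp exp (fun s0 => b * ln s0)).
  rewrite Rmult_comm. apply derivable_pt_lim_comp.
  - change (fun s0 => b * ln s0) with (mult_real_fct b ln). apply derivable_pt_lim_scal. apply derivable_pt_lim_ln; auto.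
  - apply derivable_pt_lim_exp. Qed.

Lemma Hw_deriv b s : 0 < s -> derivable_pt_lim (Hw b) s (dHw b s).
Proof. intro Hs. unfold Hw, dHw.
  assert (D := pw_deriv b s Hs).
  apply dpl_ext with (g' := fun s => 1 - (1 - pw b s) * (1 - pw b s)) (eta := 1). lra. intros; ring.
  replace (2 * (1 - pw b s) * (b * pw b s / s)) with (0 - ((0 - b * pw b s / s) * (1 - pw b s) + (1 - pw b s) * (0 - b * pw b s / s))) by ring.
  apply (derivable_pt_lim_minus (fct_cte 1) (fun s => (1 - pw b s) * (1 - pw b s))). apply derivable_pt_lim_const.
  apply (derivable_pt_lim_mult (fun s => 1 - pw b s) (fun s => 1 - pw b s));
  apply (derivable_pt_lim_minus (fct_cte 1) (pw b)); auto; apply derivable_pt_lim_const. Qed.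

Lemma Hw_range b s : 0 < b -> s <= 1 -> 0 <= Hw b s <= 1.
Proof. intros. unfold Hw. pose proof (pw_nonneg b s). pose proof (pw_le1 b s H H0). nra. Qed.

Lemma Hw_1 b : Hw b 1 = 1.
Proof. unfold Hw. rewrite pw_1. ring. Qed.
Lemma Hw_0 b : Hw b 0 = 0.
Proof. unfold Hw. rewrite pw_0. ring. Qed.
Lemma dHw_1 b : dHw b 1 = 0.
Proof. unfold dHw. rewrite pw_1. ring. Qed.

Lemma Hw_le b s : 0 < b -> s <= 1 -> Hw b s <= 2 * pw b s.
Proof. intros. unfold Hw. pose proof (pw_nonneg b s). pose proof (pw_le1 b s H H0). nra. Qed.

Lemma dHw_bound b s : 0 < b -> 0 < s <= 1 -> 0 <= dHw b s /\ dHw b s * s <= 2 * b * Hw b s.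
Proof. intros Hb Hs. unfold dHw, Hw. pose proof (pw_pos b s (proj1 Hs)). pose proof (pw_le1 b s Hb (proj2 Hs)).
  set (q := pw b s) in *. split.
  - apply Rmult_le_pos. nra. unfold Rdiv. apply Rmult_le_pos. nra. left; apply Rinv_0_lt_compat; lra.
  - replace (2 * (1 - q) * (b * q / s) * s) with (2 * (1 - q) * b * q) by (field; lra). nra. Qed.

Definition phiw b t0 d u := Hw b ((u - t0) / d).
Definition dphiw b t0 d u := dHw b ((u - t0) / d) / d.
Definition psiw b t1 d u := Hw b ((t1 - u) / d).
Definition dpsiw b t1 d u := - (dHw b ((t1 - u) / d) / d).

Lemma phiw_deriv b t0 d u : 0 < d -> t0 < u -> derivable_pt_lim (phiw b t0 d) u (dphiw b t0 d u).
Proof. intros Hd Hu. unfold phiw, dphiw.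
  replace (dHw b ((u - t0) / d) / d) with (dHw b ((fun u => / d * u + (- t0 / d)) u) * / d).
  2:{ unfold Rdiv. f_equal. f_equal. field. lra. }
  apply dpl_ext with (g' := comp (Hw b) (fun u => / d * u + (- t0 / d))) (eta := 1). lra.
  intros h _. unfold comp. f_equal. field. lra.
  apply derivable_pt_lim_comp. apply dpl_affine. apply Hw_deriv.
  replace (/ d * u + - t0 / d) with ((u - t0) / d) by (field; lra). apply Rdiv_lt_0_compat; lra. Qed.

Lemma psiw_deriv b t1 d u : 0 < d -> u < t1 -> derivable_pt_lim (psiw b t1 d) u (dpsiw b t1 d u).
Proof. intros Hd Hu. unfold psiw, dpsiw.
  replace (- (dHw b ((t1 - u) / d) / d)) with (dHw b ((fun u => - / d * u + (t1 / d)) u) * (- / d)).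
  2:{ unfold Rdiv. replace (- / d * u + t1 * / d) with ((t1 - u) * / d) by ring. ring. }
  apply dpl_ext with (g' := comp (Hw b) (fun u => - / d * u + (t1 / d))) (eta := 1). lra.
  intros h _. unfold comp. f_equal. field. lra.
  apply derivable_pt_lim_comp. apply dpl_affine. apply Hw_deriv.
  replace (- / d * u + t1 / d) with ((t1 - u) / d) by (field; lra). apply Rdiv_lt_0_compat; lra. Qed.

Lemma tri_le n (u v : vec n) a b : vnorm u <= a -> vnorm v <= b -> vnorm (fun i => u i + v i) <= a + b.
Proof. intros. pose proof (vnorm_triang n u v). lra. Qed.

Lemma blend_bound n (FW FX FL X X' Lv Lv' : vec n) w w' eps k L :
  0 <= w <= 1 -> 0 <= L ->
  vnorm (fun i => FX i - X' i) <= eps -> vnorm (fun i => FL i - Lv' i) <= eps - k/2 ->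
  vnorm (fun i => FW i - FX i) <= L * vnorm (fun i => (X i + w * (Lv i - X i)) - X i) ->
  vnorm (fun i => FW i - FL i) <= L * vnorm (fun i => (X i + w * (Lv i - X i)) - Lv i) ->
  2 * L * vnorm (fun i => Lv i - X i) <= k/4 -> Rabs w' * vnorm (fun i => Lv i - X i) <= w * k / 4 ->
  vnorm (fun i => FW i - (X' i + w * (Lv' i - X' i) + w' * (Lv i - X i))) <= eps.
Proof.
  intros Hw HL H1 H2 H3 H4 H5 H6.
  set (D := vnorm (fun i => Lv i - X i)) in *.
  assert (E3 : vnorm (fun i => (X i + w * (Lv i - X i)) - X i) = w * D).
  { unfold D. replace (w * _) with (Rabs w * vnorm (fun i => Lv i - X i)) by (rewrite Rabs_pos_eq; lra). rewrite <- vnorm_scal. apply vnorm_ext; intro; ring. }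
  assert (E4 : vnorm (fun i => (X i + w * (Lv i - X i)) - Lv i) = (1 - w) * D).
  { unfold D. replace ((1 - w) * _) with (Rabs (1 - w) * vnorm (fun i => Lv i - X i)) by (rewrite Rabs_pos_eq; lra). rewrite <- vnorm_scal. rewrite <- vnorm_opp. apply vnorm_ext; intro. ring. }
  rewrite E3 in H3. rewrite E4 in H4.
  assert (HD : 0 <= D) by apply vnorm_nonneg.
  assert (E : (fun i => FW i - (X' i + w * (Lv' i - X' i) + w' * (Lv i - X i))) =
    (fun i => (fun i => (fun i => (fun i => (1 - w) * (FX i - X' i) + w * (FL i - Lv' i)) i + (1 - w) * (FW i - FX i)) i + w * (FW i - FL i)) i + (- w') * (Lv i - X i))).
  { apply functional_extensionality; intro; ring. }
  rewrite E.
  eapply Rle_trans. apply tri_le. apply tri_le. apply tri_le. apply tri_le.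
  rewrite vnorm_scal. apply Rmult_le_compat_l. apply Rabs_pos. apply H1.
  rewrite vnorm_scal. apply Rmult_le_compat_l. apply Rabs_pos. apply H2.
  rewrite vnorm_scal. apply Rmult_le_compat_l. apply Rabs_pos. apply H3.
  rewrite vnorm_scal. apply Rmult_le_compat_l. apply Rabs_pos. apply H4.
  rewrite vnorm_scal. right; reflexivity.
  rewrite Rabs_Ropp. rewrite (Rabs_pos_eq (1 - w)), (Rabs_pos_eq w) by lra.
  fold D. assert (A1: w * (2 * L * D) <= w * (k/4)) by (apply Rmult_le_compat_l; lra).
  assert (A2: 0 <= w * w * (2 * L * D)) by (apply Rmult_le_pos; nra).
  nra.
Qed.

Definition pc (c : R) (g1 g2 : R -> R) := fun u => if Rle_dec u c then g1 u else g2 u.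
Definition vpc {n} (c : R) (g1 g2 : R -> vec n) : R -> vec n := fun u i => if Rle_dec u c then g1 u i else g2 u i.

Lemma dn_ext g g' u l eta : 0 < eta -> (forall v, 0 <= v -> Rabs (v - u) < eta -> g v = g' v) ->
  0 <= u -> deriv_nonneg g' u l -> deriv_nonneg g u l.
Proof. intros He E Hu H e He'. destruct (H e He') as [d [Hd P]]. exists (Rmin d eta). split. apply Rmin_pos; auto.
  intros h Hh Hh0 Ha. pose proof (Rmin_l d eta); pose proof (Rmin_r d eta).
  rewrite (E (u + h)), (E u). apply P; auto; lra. lra. rewrite Rminus_diag, Rabs_R0. lra. lra. replace (u + h - u) with h by ring. lra. Qed.

Lemma pc_left c g1 g2 u l : 0 <= u < c -> deriv_nonneg g1 u l -> deriv_nonneg (pc c g1 g2) u l.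
Proof. intros Hu H. apply dn_ext with g1 (c - u); try lra; auto. intros v _ Hv. unfold pc.
  destruct Rle_dec; auto. exfalso. apply Rabs_def2 in Hv. lra. Qed.

Lemma pc_right c g1 g2 u l : 0 <= c < u -> deriv_nonneg g2 u l -> deriv_nonneg (pc c g1 g2) u l.
Proof. intros Hu H.
  apply dn_ext with g2 (u - c); try lra; auto. intros v _ Hv. unfold pc.
  destruct Rle_dec; auto. exfalso. apply Rabs_def2 in Hv. lra. Qed.

Lemma pc_mid c g1 g2 l : 0 < c -> g1 c = g2 c -> ld g1 c l -> rd g2 c l -> deriv_nonneg (pc c g1 g2) c l.
Proof. intros Hc E H1 H2. apply dn_of_rdld; auto.
  - apply rd_ext with g2 1. lra. intros h Hh. unfold pc. destruct Rle_dec; auto. replace (c + h) with c by lra. auto. auto.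
  - apply ld_ext with g1 1. lra. intros h Hh. unfold pc. destruct Rle_dec; auto. lra. auto. Qed.

Lemma pc_val_l c g1 g2 u : u <= c -> pc c g1 g2 u = g1 u.
Proof. intros. unfold pc. destruct Rle_dec; auto; lra. Qed.
Lemma pc_val_r c g1 g2 u : c < u -> pc c g1 g2 u = g2 u.
Proof. intros. unfold pc. destruct Rle_dec; auto; lra. Qed.
Lemma vpc_val_l {n} c (g1 g2 : R -> vec n) u : u <= c -> vpc c g1 g2 u = g1 u.
Proof. intros. unfold vpc. apply functional_extensionality; intro. destruct Rle_dec; auto; lra. Qed.
Lemma vpc_val_r {n} c (g1 g2 : R -> vec n) u : c < u -> vpc c g1 g2 u = g2 u.
Proof. intros. unfold vpc. apply functional_extensionality; intro. destruct Rle_dec; auto; lra. Qed.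

Lemma oh_rd g E c l eta (q : R -> R) : derivable_pt_lim g c l -> E c = 0 -> 0 < eta ->
  (forall h, 0 < h < eta -> Rabs (E (c + h)) <= q h * h) ->
  (forall e, 0 < e -> exists e', 0 < e' /\ forall h, 0 < h < e' -> q h < e) ->
  rd (fun u => g u + E u) c l.
Proof. intros Hg E0 Heta HE Hq e He. destruct (Hg (e/2) ltac:(lra)) as [d Hd].
  destruct (Hq (e/2) ltac:(lra)) as [e' [He' Pe']].
  exists (Rmin d (Rmin eta e')). split. apply Rmin_pos. apply cond_pos. apply Rmin_pos; auto.
  intros h Hh. pose proof (Rmin_l d (Rmin eta e')); pose proof (Rmin_r d (Rmin eta e')).
  pose proof (Rmin_l eta e'); pose proof (Rmin_r eta e').
  replace ((g (c + h) + E (c + h) - (g c + E c)) / h - l) with (((g (c + h) - g c) / h - l) + E (c + h) / h) by (rewrite E0; field; lra).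
  eapply Rle_lt_trans. apply Rabs_triang.
  assert (A1 : Rabs ((g (c + h) - g c) / h - l) < e/2). { apply Hd. lra. rewrite Rabs_pos_eq; lra. }
  assert (A2 : Rabs (E (c + h) / h) < e/2).
  { unfold Rdiv. rewrite Rabs_mult, Rabs_inv, (Rabs_pos_eq h) by lra.
    apply Rmult_lt_reg_r with h. lra. rewrite Rmult_assoc, Rinv_l by lra.
    eapply Rle_lt_trans. rewrite Rmult_1_r. apply HE; lra. apply Rmult_lt_compat_r. lra. apply Pe'; lra. }
  lra. Qed.

Lemma oh_ld g E c l eta (q : R -> R) : derivable_pt_lim g c l -> E c = 0 -> 0 < eta ->
  (forall h, 0 < h < eta -> Rabs (E (c - h)) <= q h * h) ->
  (forall e, 0 < e -> exists e', 0 < e' /\ forall h, 0 < h < e' -> q h < e) ->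
  ld (fun u => g u + E u) c l.
Proof. intros Hg E0 Heta HE Hq e He. destruct (Hg (e/2) ltac:(lra)) as [d Hd].
  destruct (Hq (e/2) ltac:(lra)) as [e' [He' Pe']].
  exists (Rmin d (Rmin eta e')). split. apply Rmin_pos. apply cond_pos. apply Rmin_pos; auto.
  intros h Hh. pose proof (Rmin_l d (Rmin eta e')); pose proof (Rmin_r d (Rmin eta e')).
  pose proof (Rmin_l eta e'); pose proof (Rmin_r eta e').
  replace ((g (c + h) + E (c + h) - (g c + E c)) / h - l) with (((g (c + h) - g c) / h - l) + E (c - (- h)) / h) by (rewrite E0; replace (c - - h) with (c + h) by ring; field; lra).
  eapply Rle_lt_trans. apply Rabs_triang.
  assert (A1 : Rabs ((g (c + h) - g c) / h - l) < e/2). { apply Hd. lra. rewrite Rabs_left; lra. }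
  assert (A2 : Rabs (E (c - - h) / h) < e/2).
  { unfold Rdiv. rewrite Rabs_mult, Rabs_inv, (Rabs_left h) by lra.
    apply Rmult_lt_reg_r with (- h). lra. rewrite Rmult_assoc, Rinv_l by lra.
    eapply Rle_lt_trans. rewrite Rmult_1_r. apply HE; lra. apply Rmult_lt_compat_r. lra. apply Pe'; lra. }
  lra. Qed.

Lemma rd_cont g c l : rd g c l -> forall e, 0 < e -> exists eta, 0 < eta /\ forall h, 0 <= h < eta -> Rabs (g (c + h) - g c) <= e.
Proof. intros H e He. destruct (H 1 Rlt_0_1) as [d [Hd P]].
  exists (Rmin d (e / (Rabs l + 1))). split. apply Rmin_pos; auto. apply Rdiv_lt_0_compat; auto. pose proof (Rabs_pos l); lra.
  intros h Hh. pose proof (Rmin_l d (e / (Rabs l + 1))); pose proof (Rmin_r d (e / (Rabs l + 1))).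
  destruct (Req_dec h 0). subst. replace (c + 0) with c by ring. rewrite Rminus_diag, Rabs_R0; lra.
  specialize (P h ltac:(lra)).
  replace (g (c + h) - g c) with (((g (c + h) - g c) / h - l) * h + l * h) by (field; lra).
  eapply Rle_trans. apply Rabs_triang. rewrite !Rabs_mult, (Rabs_pos_eq h) by lra.
  assert (h * (Rabs l + 1) <= e). { assert (Hh2: h <= e / (Rabs l + 1)) by lra. pose proof (Rabs_pos l). apply Rmult_le_compat_r with (r := Rabs l + 1) in Hh2; [|lra]. unfold Rdiv in Hh2. rewrite Rmult_assoc, Rinv_l in Hh2; lra. }
  nra. Qed.

Lemma ld_cont g c l : ld g c l -> forall e, 0 < e -> exists eta, 0 < eta /\ forall h, 0 <= h < eta -> Rabs (g (c - h) - g c) <= e.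
Proof. intros H e He. destruct (H 1 Rlt_0_1) as [d [Hd P]].
  exists (Rmin d (e / (Rabs l + 1))). split. apply Rmin_pos; auto. apply Rdiv_lt_0_compat; auto. pose proof (Rabs_pos l); lra.
  intros h Hh. pose proof (Rmin_l d (e / (Rabs l + 1))); pose proof (Rmin_r d (e / (Rabs l + 1))).
  destruct (Req_dec h 0). subst. replace (c - 0) with c by ring. rewrite Rminus_diag, Rabs_R0; lra.
  specialize (P (- h) ltac:(lra)). replace (c + - h) with (c - h) in P by ring.
  replace (g (c - h) - g c) with (((g (c - h) - g c) / (- h) - l) * (- h) + l * (- h)) by (field; lra).
  eapply Rle_trans. apply Rabs_triang. rewrite !Rabs_mult, (Rabs_left (- h)) by lra.
  assert (h * (Rabs l + 1) <= e). { assert (Hh2: h <= e / (Rabs l + 1)) by lra. pose proof (Rabs_pos l). apply Rmult_le_compat_r with (r := Rabs l + 1) in Hh2; [|lra]. unfold Rdiv in Hh2. rewrite Rmult_assoc, Rinv_l in Hh2; lra. }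
  nra. Qed.

Lemma dpl_val f x l l' : derivable_pt_lim f x l -> l = l' -> derivable_pt_lim f x l'.
Proof. intros; subst; auto. Qed.
Lemma dpl_plus' f1 f2 x l1 l2 : derivable_pt_lim f1 x l1 -> derivable_pt_lim f2 x l2 -> derivable_pt_lim (fun s => f1 s + f2 s) x (l1 + l2).
Proof. apply derivable_pt_lim_plus. Qed.
Lemma dpl_minus' f1 f2 x l1 l2 : derivable_pt_lim f1 x l1 -> derivable_pt_lim f2 x l2 -> derivable_pt_lim (fun s => f1 s - f2 s) x (l1 - l2).
Proof. apply derivable_pt_lim_minus. Qed.
Lemma dpl_mult' f1 f2 x l1 l2 : derivable_pt_lim f1 x l1 -> derivable_pt_lim f2 x l2 -> derivable_pt_lim (fun s => f1 s * f2 s) x (l1 * f2 x + f1 x * l2).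
Proof. apply derivable_pt_lim_mult. Qed.
Lemma dpl_lin a t0 c x : derivable_pt_lim (fun s => a + (s - t0) * c) x c.
Proof. apply dpl_ext with (g' := fun s => c * s + (a - t0 * c)) (eta := 1). lra. intros. ring. apply dpl_affine. Qed.

Lemma blend_dpl (g wt : R -> R) a t0 c u g' wt' : derivable_pt_lim g u g' -> derivable_pt_lim wt u wt' ->
  derivable_pt_lim (fun s => g s + wt s * ((a + (s - t0) * c) - g s)) u (g' + wt u * (c - g') + wt' * ((a + (u - t0) * c) - g u)).
Proof. intros Hg Hw. eapply dpl_val. apply dpl_plus'. apply Hg. apply dpl_mult'. apply Hw. apply dpl_minus'. apply dpl_lin. apply Hg. cbv beta. ring. Qed.

Lemma vec_MVT n (x dx : R -> vec n) a c B : a <= c ->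
  (forall u, a <= u <= c -> forall i, derivable_pt_lim (fun s => x s i) u (dx u i)) ->
  (forall u, a <= u <= c -> vnorm (dx u) <= B) -> vnorm (fun i => x c i - x a i) <= INR n * B * (c - a).
Proof. intros Hac Hd HB. eapply Rle_trans. apply vnorm_le_sum.
  eapply Rle_trans. apply sum_fin_le with (h := fun _ => B * (c - a)). intro i.
  apply (MVT_bound (fun s => x s i) (fun u => dx u i)); auto. intros u Hu. eapply Rle_trans. apply vnorm_coord. auto.
  rewrite sum_fin_const. right; ring. Qed.

Definition ellf {n} (x : R -> vec n) (m : vec n) t0 : R -> vec n := fun u i => x t0 i + (u - t0) * m i.
Definition blend {n} (g L : R -> vec n) (wt : R -> R) : R -> vec n := fun u i => g u i + wt u * (L u i - g u i).
Definition dblend {n} (g dg L : R -> vec n) (m : vec n) (wt dwt : R -> R) : R -> vec n :=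
  fun u i => dg u i + wt u * (m i - dg u i) + dwt u * (L u i - g u i).

Lemma div_le1 a d : 0 < d -> a <= d -> a / d <= 1.
Proof. intros. apply Rmult_le_reg_r with d; auto. unfold Rdiv. rewrite Rmult_assoc, Rinv_l; lra. Qed.

Lemma div_nonneg a d : 0 <= a -> 0 < d -> 0 <= a / d.
Proof. intros. unfold Rdiv. apply Rmult_le_pos; auto. left; apply Rinv_0_lt_compat; auto. Qed.

Lemma construct n (f : vec n -> vec n) eps (x dx z dz : R -> vec n) t d b k L r1 Mb (p m : vec n) :
  (forall u, 0 <= u -> forall i, deriv_nonneg (fun s => x s i) u (dx u i)) ->
  (forall u, 0 <= u -> vnorm (fun i => f (x u) i - dx u i) <= eps) ->
  (forall u, 0 <= u -> forall i, deriv_nonneg (fun s => z s i) u (dz u i)) ->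
  (forall u, 0 <= u -> vnorm (fun i => f (z u) i - dz u i) <= eps) ->
  0 < d < t -> p = x t -> z 0 = p ->
  (forall i, x (t - d) i + 2 * d * m i = z d i) ->
  0 <= L -> (forall u v, vnorm (fun i => u i - p i) <= r1 -> vnorm (fun i => v i - p i) <= r1 ->
     vnorm (fun i => f u i - f v i) <= L * vnorm (fun i => u i - v i)) ->
  (forall c, t - d <= c <= t -> vnorm (fun i => x c i - p i) <= r1) ->
  (forall v, 0 <= v <= d -> vnorm (fun i => z v i - p i) <= r1) ->
  (forall q, vnorm (fun i => q i - p i) <= r1 -> vnorm (fun i => f q i - m i) <= eps - k/2) ->
  0 < k -> 4 * L * r1 <= k/4 ->
  (forall q, vnorm (fun i => q i - p i) <= r1 -> vnorm (f q) + eps <= Mb) -> vnorm m <= Mb ->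
  0 < b -> 2 * b * (Mb * (1 + INR n)) <= k/4 ->
  exists w, eps_solution f eps w /\ w 0 = x 0 /\ forall u, t + d <= u -> w u = z (u - t).
Proof.
  intros Dx Bx Dz Bz Hd Hp Hz0 Hm HL Lip Balx Balz Slack Hk HLr HMb Hmb Hb Hbeta.
  set (t0 := t - d). set (t1 := t + d).
  set (K := Mb * (1 + INR n)).
  set (l := ellf x m t0).
  set (phi := phiw b t0 d). set (dphi := dphiw b t0 d).
  set (psi := psiw b t1 d). set (dpsi := dpsiw b t1 d).
  set (zt := fun u => z (u - t)). set (dzt := fun u => dz (u - t)).
  set (P1 := blend x l phi). set (dP1 := dblend x dx l m phi dphi).
  set (P2 := blend zt l psi). set (dP2 := dblend zt dzt l m psi dpsi).
  exists (vpc t0 x (vpc t P1 (vpc t1 P2 zt))).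
  assert (Ht0 : 0 < t0) by (unfold t0; lra).
  assert (Et0 : t0 = t - d) by reflexivity. assert (Et1 : t1 = t + d) by reflexivity.
  assert (phi_t0 : phi t0 = 0). { unfold phi, phiw. replace ((t0 - t0) / d) with 0 by (field; lra). apply Hw_0. }
  assert (phi_t : phi t = 1). { unfold phi, phiw, t0. replace ((t - (t - d)) / d) with 1 by (field; lra). apply Hw_1. }
  assert (dphi_t : dphi t = 0). { unfold dphi, dphiw, t0. replace ((t - (t - d)) / d) with 1 by (field; lra). rewrite dHw_1. unfold Rdiv; ring. }
  assert (psi_t : psi t = 1). { unfold psi, psiw, t1. replace ((t + d - t) / d) with 1 by (field; lra). apply Hw_1. }
  assert (dpsi_t : dpsi t = 0). { unfold dpsi, dpsiw, t1. replace ((t + d - t) / d) with 1 by (field; lra). rewrite dHw_1. unfold Rdiv; ring. }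
  assert (psi_t1 : psi t1 = 0). { unfold psi, psiw. replace ((t1 - t1) / d) with 0 by (field; lra). apply Hw_0. }
  assert (phi_rng : forall u, t0 <= u <= t -> 0 <= phi u <= 1).
  { intros u Hu. unfold phi, phiw. apply Hw_range; auto. apply div_le1; unfold t0 in *; lra. }
  assert (psi_rng : forall u, t <= u <= t1 -> 0 <= psi u <= 1).
  { intros u Hu. unfold psi, psiw. apply Hw_range; auto. apply div_le1; unfold t1 in *; lra. }
  assert (dphi_bd : forall u, t0 < u <= t -> Rabs (dphi u) * (u - t0) <= 2 * b * phi u).
  { intros u Hu. unfold dphi, phi, dphiw, phiw. set (s := (u - t0) / d).
    assert (Hs : 0 < s <= 1). { unfold s. split. apply Rdiv_lt_0_compat; lra. apply div_le1; unfold t0 in *; lra. }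
    destruct (dHw_bound b s Hb Hs) as [H1 H2]. rewrite Rabs_pos_eq by (apply div_nonneg; lra).
    replace (dHw b s / d * (u - t0)) with (dHw b s * s) by (unfold s; field; lra). auto. }
  assert (dpsi_bd : forall u, t <= u < t1 -> Rabs (dpsi u) * (t1 - u) <= 2 * b * psi u).
  { intros u Hu. unfold dpsi, psi, dpsiw, psiw. set (s := (t1 - u) / d).
    assert (Hs : 0 < s <= 1). { unfold s. split. apply Rdiv_lt_0_compat; lra. apply div_le1; unfold t1 in *; lra. }
    destruct (dHw_bound b s Hb Hs) as [H1 H2]. rewrite Rabs_Ropp, Rabs_pos_eq by (apply div_nonneg; lra).
    replace (dHw b s / d * (t1 - u)) with (dHw b s * s) by (unfold s; field; lra). auto. }
  assert (Bl : forall u, t0 <= u <= t1 -> vnorm (fun i => l u i - p i) <= r1).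
  { intros u Hu. assert (E : vnorm (fun i => l u i - p i) = vnorm (fun i => x t0 i + ((u - t0) / (2 * d)) * (z d i - x t0 i) - p i)).
    { apply vnorm_ext. intro i. unfold l, ellf. rewrite <- (Hm i). fold t0. field. lra. }
    rewrite E. apply ball_convex. split. apply div_nonneg; lra. apply div_le1; unfold t0, t1 in *; lra.
    apply Balx; unfold t0 in *; lra. apply Balz; lra. }
  assert (Bxc : forall c, t0 <= c <= t -> vnorm (fun i => x c i - p i) <= r1) by (intros; apply Balx; unfold t0 in *; lra).
  assert (Bzc : forall u, t <= u <= t1 -> vnorm (fun i => zt u i - p i) <= r1) by (intros; apply Balz; unfold t1 in *; lra).
  assert (nrm_le : forall (u v : vec n), vnorm v <= vnorm u + vnorm (fun i => u i - v i)).
  { intros u v. rewrite vnorm_sub_sym. eapply Rle_trans; [|apply vnorm_triang]. right. apply vnorm_ext; intro; ring. }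
  assert (dxb : forall c, t0 <= c <= t -> vnorm (dx c) <= Mb).
  { intros c Hc. eapply Rle_trans. apply (nrm_le (f (x c))). pose proof (HMb _ (Bxc c Hc)). pose proof (Bx c ltac:(lra)). lra. }
  assert (dzb : forall u, t <= u <= t1 -> vnorm (dzt u) <= Mb).
  { intros u Hu. eapply Rle_trans. apply (nrm_le (f (zt u))). pose proof (HMb _ (Bzc u Hu)). pose proof (Bz (u - t) ltac:(lra)). unfold zt, dzt in *. lra. }
  assert (Kpos : 0 <= Mb) by (eapply Rle_trans; [apply vnorm_nonneg|apply Hmb]).
  assert (D1 : forall u, t0 <= u <= t -> vnorm (fun i => l u i - x u i) <= K * (u - t0)).
  { intros u Hu. assert (E : (fun i => l u i - x u i) = (fun i => (fun i => (u - t0) * m i) i + (fun i => - (x u i - x t0 i)) i)).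
    { apply functional_extensionality; intro i. unfold l, ellf. ring. }
    rewrite E. eapply Rle_trans. apply vnorm_triang. rewrite vnorm_scal, vnorm_opp, Rabs_pos_eq by lra.
    assert (vnorm (fun i => x u i - x t0 i) <= INR n * Mb * (u - t0)).
    { apply (vec_MVT n x dx). lra. intros c Hc i. apply dpl_of_dn. lra. apply Dx. lra. intros c Hc. apply dxb. lra. }
    unfold K. assert ((u - t0) * vnorm m <= (u - t0) * Mb) by (apply Rmult_le_compat_l; lra). nra. }
  assert (D2 : forall u, t < u <= t1 -> vnorm (fun i => l u i - zt u i) <= K * (t1 - u)).
  { intros u Hu. assert (E : (fun i => l u i - zt u i) = (fun i => (fun i => (- (t1 - u)) * m i) i + (fun i => z d i - z (u - t) i) i)).
    { apply functional_extensionality; intro i. unfold l, ellf, zt. rewrite <- (Hm i). fold t0. unfold t1, t0. ring. }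
    rewrite E. eapply Rle_trans. apply vnorm_triang. rewrite vnorm_scal, Rabs_Ropp, Rabs_pos_eq by lra.
    assert (vnorm (fun i => z d i - z (u - t) i) <= INR n * Mb * (d - (u - t))).
    { apply (vec_MVT n z dz). unfold t1 in *; lra. intros c Hc i. apply dpl_of_dn. lra. apply Dz. lra.
      intros c Hc. replace c with ((c + t) - t) by ring. apply (dzb (c + t)). unfold t1 in *; lra. }
    replace (d - (u - t)) with (t1 - u) in H by (unfold t1; ring).
    unfold K. assert ((t1 - u) * vnorm m <= (t1 - u) * Mb) by (apply Rmult_le_compat_l; lra). nra. }
  assert (Hpos : forall e, 0 < e -> exists e', 0 < e' /\ forall h, 0 < h < e' -> 2 * pw b (h / d) * K < e).
  { intros e He. assert (0 < K + 1) by (unfold K; pose proof (pos_INR n); nra).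
    destruct (pw_small b (e / (2 * (K + 1))) Hb) as [eta [Heta Peta]]. apply Rdiv_lt_0_compat; lra.
    exists (eta * d). split. nra. intros h Hh. assert (h / d < eta). { apply Rmult_lt_reg_r with d. lra. unfold Rdiv. rewrite Rmult_assoc, Rinv_l; lra. }
    specialize (Peta _ H0). pose proof (pw_nonneg b (h / d)).
    assert (2 * pw b (h/d) * (K + 1) < e). { apply Rmult_lt_reg_r with (/ (2 * (K + 1))). apply Rinv_0_lt_compat; lra.
      replace (2 * pw b (h / d) * (K + 1) * / (2 * (K + 1))) with (pw b (h/d)) by (field; lra). auto. }
    unfold K in *. nra. }
  assert (DP1 : forall u, t0 < u -> forall i, derivable_pt_lim (fun s => P1 s i) u (dP1 u i)).
  { intros u Hu i. unfold P1, blend, l, ellf, dP1, dblend, l, ellf. apply blend_dpl.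
    apply dpl_of_dn. lra. apply Dx. lra. apply phiw_deriv; lra. }
  assert (Dzt : forall u, t < u -> forall i, derivable_pt_lim (fun s => zt s i) u (dzt u i)).
  { intros u Hu i. unfold zt, dzt. apply (dpl_shift (fun s => z s i)). apply dpl_of_dn. lra. apply Dz. lra. }
  assert (DP2 : forall u, t < u < t1 -> forall i, derivable_pt_lim (fun s => P2 s i) u (dP2 u i)).
  { intros u Hu i. unfold P2, blend, l, ellf, dP2, dblend, l, ellf. apply blend_dpl.
    apply Dzt. lra. apply psiw_deriv; lra. }
  assert (rdP1 : forall i, rd (fun s => P1 s i) t0 (dx t0 i)).
  { intro i. unfold P1, blend. apply oh_rd with (eta := d) (q := fun h => 2 * pw b (h / d) * K).
    apply dpl_of_dn. lra. apply Dx. lra. rewrite phi_t0. ring. lra.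
    - intros h Hh. assert (Hr := phi_rng (t0 + h) ltac:(unfold t0 in *; lra)).
      rewrite Rabs_mult, (Rabs_pos_eq (phi (t0 + h))) by lra.
      assert (A1 : Rabs (l (t0 + h) i - x (t0 + h) i) <= K * h).
      { eapply Rle_trans. apply (vnorm_coord _ (fun i => l (t0 + h) i - x (t0 + h) i)). eapply Rle_trans; [apply D1; unfold t0 in *; lra|]. right; ring. }
      assert (A2 : phi (t0 + h) <= 2 * pw b (h / d)).
      { unfold phi, phiw. replace (t0 + h - t0) with h by ring. apply Hw_le; auto. apply div_le1; lra. }
      pose proof (Rabs_pos (l (t0 + h) i - x (t0 + h) i)). pose proof (pw_nonneg b (h/d)).
      assert (phi (t0 + h) * Rabs (l (t0 + h) i - x (t0 + h) i) <= phi (t0 + h) * (K * h)) by (apply Rmult_le_compat_l; lra).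
      assert (phi (t0 + h) * (K * h) <= 2 * pw b (h / d) * (K * h)) by (apply Rmult_le_compat_r; [unfold K in *; pose proof (pos_INR n); nra| lra]).
      nra.
    - apply Hpos. }
  assert (rdP2 : forall i, rd (fun s => P2 s i) t (dP1 t i)).
  { intro i. assert (E : dP1 t i = m i). { unfold dP1, dblend. rewrite phi_t, dphi_t. ring. }
    rewrite E. set (zh := ext_r (fun s => zt s i) t (dz 0 i)).
    apply rd_ext with (g' := fun s => zh s + psi s * ((x t0 i + (s - t0) * m i) - zh s)) (eta := 1). lra.
    { intros h Hh. unfold zh, ext_r, P2, blend, l, ellf. destruct Rle_dec; [auto|lra]. }
    apply dpl_rd. eapply dpl_val. apply blend_dpl. apply ext_r_dpl.
    unfold zt. apply (rd_shift (fun s => z s i)). rewrite Rminus_diag. apply rd_of_dn. lra. apply Dz. lra.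
    apply psiw_deriv; unfold t1; lra. fold dpsi. rewrite psi_t, dpsi_t. ring. }
  assert (EdP2 : forall i, dP2 t1 i = dzt t1 i).
  { intro i. unfold dP2, dblend. rewrite psi_t1. replace (l t1 i - zt t1 i) with 0. ring.
    unfold l, ellf, zt, t1, t0. replace (t + d - t) with d by ring. rewrite <- (Hm i). ring. }
  assert (ldP2 : forall i, ld (fun s => P2 s i) t1 (dzt t1 i)).
  { intro i. unfold P2, blend. apply oh_ld with (eta := d) (q := fun h => 2 * pw b (h / d) * K).
    apply Dzt. unfold t1; lra. rewrite psi_t1. ring. lra.
    - intros h Hh. assert (Hr := psi_rng (t1 - h) ltac:(unfold t1 in *; lra)).
      rewrite Rabs_mult, (Rabs_pos_eq (psi (t1 - h))) by lra.
      assert (A1 : Rabs (l (t1 - h) i - zt (t1 - h) i) <= K * h).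
      { eapply Rle_trans. apply (vnorm_coord _ (fun i => l (t1 - h) i - zt (t1 - h) i)). eapply Rle_trans; [apply D2; unfold t1 in *; lra|]. right; ring. }
      assert (A2 : psi (t1 - h) <= 2 * pw b (h / d)).
      { unfold psi, psiw. replace (t1 - (t1 - h)) with h by ring. apply Hw_le; auto. apply div_le1; lra. }
      pose proof (Rabs_pos (l (t1 - h) i - zt (t1 - h) i)). pose proof (pw_nonneg b (h/d)).
      assert (psi (t1 - h) * Rabs (l (t1 - h) i - zt (t1 - h) i) <= psi (t1 - h) * (K * h)) by (apply Rmult_le_compat_l; lra).
      assert (psi (t1 - h) * (K * h) <= 2 * pw b (h / d) * (K * h)) by (apply Rmult_le_compat_r; [unfold K in *; pose proof (pos_INR n); nra| lra]).
      nra.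
    - apply Hpos. }
  assert (EP1t0 : forall i, P1 t0 i = x t0 i). { intro i. unfold P1, blend. rewrite phi_t0. ring. }
  assert (EP1t : forall i, P1 t i = l t i). { intro i. unfold P1, blend. rewrite phi_t. ring. }
  assert (EP2t : forall i, P2 t i = l t i). { intro i. unfold P2, blend. rewrite psi_t. ring. }
  assert (EP2t1 : forall i, P2 t1 i = zt t1 i). { intro i. unfold P2, blend. rewrite psi_t1. ring. }
  split.
  { exists (vpc t0 dx (vpc t dP1 (vpc t1 dP2 dzt))). split.
    - intros u Hu i.
      change (deriv_nonneg (pc t0 (fun s => x s i) (pc t (fun s => P1 s i) (pc t1 (fun s => P2 s i) (fun s => zt s i)))) u
         (vpc t0 dx (vpc t dP1 (vpc t1 dP2 dzt)) u i)).
      destruct (Rlt_or_le u t0) as [H1|H1].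
      { rewrite vpc_val_l by lra. apply pc_left. lra. apply Dx; lra. }
      destruct (Req_dec u t0) as [H2|H2].
      { subst u. rewrite vpc_val_l by lra. apply pc_mid. lra. rewrite pc_val_l by (unfold t0; lra). auto.
        apply dpl_ld. apply dpl_of_dn. lra. apply Dx. lra.
        apply rd_ext with (g' := fun s => P1 s i) (eta := d). lra. intros h Hh. rewrite pc_val_l; auto. unfold t0; lra. apply rdP1. }
      rewrite vpc_val_r by lra. apply pc_right. lra.
      destruct (Rlt_or_le u t) as [H3|H3].
      { rewrite vpc_val_l by lra. apply pc_left. lra. apply dn_of_dpl. lra. apply DP1. lra. }
      destruct (Req_dec u t) as [H4|H4].
      { subst u. rewrite vpc_val_l by lra. apply pc_mid. lra. rewrite pc_val_l by (unfold t1; lra). rewrite EP1t, EP2t. auto.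
        apply dpl_ld. apply DP1. lra.
        apply rd_ext with (g' := fun s => P2 s i) (eta := d). lra. intros h Hh. rewrite pc_val_l; auto. unfold t1; lra. apply rdP2. }
      rewrite vpc_val_r by lra. apply pc_right. lra.
      destruct (Rlt_or_le u t1) as [H5|H5].
      { rewrite vpc_val_l by lra. apply pc_left. lra. apply dn_of_dpl. lra. apply DP2. lra. }
      destruct (Req_dec u t1) as [H6|H6].
      { subst u. rewrite vpc_val_l by lra. rewrite EdP2. apply pc_mid. lra. apply EP2t1.
        apply ldP2. apply dpl_rd. apply Dzt. unfold t1; lra. }
      rewrite vpc_val_r by lra. apply pc_right. lra. apply dn_of_dpl. lra. apply Dzt. lra.
    - intros u Hu.
      destruct (Rle_or_lt u t0) as [H1|H1].
      { rewrite !vpc_val_l by lra. apply Bx; lra. }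
      rewrite !(vpc_val_r t0) by lra.
      destruct (Rle_or_lt u t) as [H3|H3].
      { rewrite !vpc_val_l by lra. unfold P1, dP1, blend, dblend.
        assert (Hr := phi_rng u ltac:(lra)).
        assert (BP : vnorm (fun i => x u i + phi u * (l u i - x u i) - p i) <= r1) by (apply ball_convex; auto; apply Bl || apply Bxc; unfold t1 in *; lra).
        apply blend_bound with (FX := f (x u)) (FL := f (l u)) (k := k) (L := L).
        + auto.
        + auto.
        + apply Bx; lra.
        + apply Slack. apply Bl. unfold t1 in *; lra.
        + apply Lip; auto. apply Bxc; lra.
        + apply Lip; auto. apply Bl; unfold t1 in *; lra.
        + assert (vnorm (fun i => l u i - x u i) <= 2 * r1).
          { eapply Rle_trans. apply (vnorm_tri3 _ _ p). rewrite (vnorm_sub_sym _ p). pose proof (Bl u ltac:(unfold t1 in *; lra)). pose proof (Bxc u ltac:(lra)). lra. }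
          nra.
        + assert (A := D1 u ltac:(lra)). assert (B1 := dphi_bd u ltac:(lra)).
          assert (Rabs (dphi u) * vnorm (fun i => l u i - x u i) <= Rabs (dphi u) * (K * (u - t0))) by (apply Rmult_le_compat_l; [apply Rabs_pos|auto]).
          fold dphi. assert (Rabs (dphi u) * (K * (u - t0)) = K * (Rabs (dphi u) * (u - t0))) by ring.
          assert (K * (Rabs (dphi u) * (u - t0)) <= K * (2 * b * phi u)) by (apply Rmult_le_compat_l; [unfold K; pose proof (pos_INR n); nra|auto]).
          fold K in Hbeta. nra. }
      rewrite !(vpc_val_r t) by lra.
      destruct (Rle_or_lt u t1) as [H5|H5].
      { rewrite !vpc_val_l by lra. unfold P2, dP2, blend, dblend.
        assert (Hr := psi_rng u ltac:(lra)).
        assert (BP : vnorm (fun i => zt u i + psi u * (l u i - zt u i) - p i) <= r1) by (apply ball_convex; auto; apply Bl || apply Bzc; unfold t1 in *; lra).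
        apply blend_bound with (FX := f (zt u)) (FL := f (l u)) (k := k) (L := L).
        + auto.
        + auto.
        + unfold zt, dzt. apply Bz; lra.
        + apply Slack. apply Bl. unfold t1 in *; lra.
        + apply Lip; auto. apply Bzc; lra.
        + apply Lip; auto. apply Bl; unfold t1 in *; lra.
        + assert (vnorm (fun i => l u i - zt u i) <= 2 * r1).
          { eapply Rle_trans. apply (vnorm_tri3 _ _ p). rewrite (vnorm_sub_sym _ p). pose proof (Bl u ltac:(unfold t1 in *; lra)). pose proof (Bzc u ltac:(lra)). lra. }
          nra.
        + assert (A := D2 u ltac:(lra)). fold dpsi.
          assert (Rabs (dpsi u) * vnorm (fun i => l u i - zt u i) <= Rabs (dpsi u) * (K * (t1 - u))) by (apply Rmult_le_compat_l; [apply Rabs_pos|auto]).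
          destruct (Req_dec u t1) as [E1|E1].
          * rewrite E1 in H. replace (t1 - t1) with 0 in H by ring. rewrite Rmult_0_r, Rmult_0_r in H. pose proof (Rabs_pos (dpsi u)). subst u. nra.
          * assert (B1 := dpsi_bd u ltac:(lra)).
            assert (Rabs (dpsi u) * (K * (t1 - u)) = K * (Rabs (dpsi u) * (t1 - u))) by ring.
            assert (K * (Rabs (dpsi u) * (t1 - u)) <= K * (2 * b * psi u)) by (apply Rmult_le_compat_l; [unfold K; pose proof (pos_INR n); nra|auto]).
            fold K in Hbeta. nra. }
      rewrite !vpc_val_r by lra. unfold zt, dzt. apply Bz. lra. }
  split.
  { rewrite vpc_val_l by lra. auto. }
  intros u Hu. destruct (Req_dec u t1) as [E1|E1].
  - subst u. rewrite vpc_val_r by lra. rewrite vpc_val_r by (unfold t1; lra). rewrite vpc_val_l by lra.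
    apply functional_extensionality; intro i. apply EP2t1.
  - rewrite !vpc_val_r; unfold t0, t1 in *; try lra. reflexivity.
Qed.

Lemma glue_eq n (f : vec n -> vec n) eps (x dx z dz : R -> vec n) t s :
  (forall u, 0 <= u -> forall i, deriv_nonneg (fun s => x s i) u (dx u i)) ->
  (forall u, 0 <= u -> vnorm (fun i => f (x u) i - dx u i) <= eps) ->
  (forall u, 0 <= u -> forall i, deriv_nonneg (fun s => z s i) u (dz u i)) ->
  (forall u, 0 <= u -> vnorm (fun i => f (z u) i - dz u i) <= eps) ->
  0 < t -> 0 < s -> z 0 = x t -> dx t = dz 0 ->
  exists w, eps_solution f eps w /\ w 0 = x 0 /\ w (t + s) = z s.
Proof.
  intros Dx Bx Dz Bz Ht Hs Hz Ha.
  exists (vpc t x (fun u => z (u - t))). split.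
  - exists (vpc t dx (fun u => dz (u - t))). split.
    + intros u Hu i. change (deriv_nonneg (pc t (fun s => x s i) (fun s => z (s - t) i)) u (vpc t dx (fun u => dz (u - t)) u i)).
      destruct (Rlt_or_le u t) as [H1|H1].
      { rewrite vpc_val_l by lra. apply pc_left. lra. apply Dx; lra. }
      destruct (Req_dec u t) as [H2|H2].
      { subst u. rewrite vpc_val_l by lra. apply pc_mid. lra. rewrite Rminus_diag, Hz. auto.
        apply dpl_ld. apply dpl_of_dn. lra. apply Dx. lra.
        apply (rd_shift (fun s => z s i)). rewrite Rminus_diag. rewrite Ha. apply rd_of_dn. lra. apply Dz. lra. }
      rewrite vpc_val_r by lra. apply pc_right. lra. apply dn_of_dpl. lra. apply (dpl_shift (fun s => z s i)).
      apply dpl_of_dn. lra. apply Dz. lra.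
    + intros u Hu. destruct (Rle_or_lt u t).
      rewrite !vpc_val_l by lra. apply Bx; lra. rewrite !vpc_val_r by lra. apply Bz; lra.
  - split. rewrite vpc_val_l by lra. auto. rewrite vpc_val_r by lra. f_equal. ring.
Qed.

Lemma sum_small n (u : vec n) e : 0 <= e -> (forall i, Rabs (u i) <= e) -> vnorm u <= INR n * e.
Proof. intros. eapply Rle_trans. apply vnorm_le_sum. rewrite <- sum_fin_const. apply sum_fin_le. auto. Qed.

Lemma small_n n e : 0 <= e -> INR n * (e / (INR n + 1)) <= e.
Proof. intro. pose proof (pos_INR n). replace (INR n * (e / (INR n + 1))) with (e * (INR n / (INR n + 1))) by (field; lra).
  assert (INR n / (INR n + 1) <= 1) by (apply div_le1; lra). assert (0 <= INR n / (INR n + 1)) by (apply div_nonneg; lra). nra. Qed.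

Lemma glue n (f : vec n -> vec n) eps (x z : R -> vec n) t s :
  smooth f -> 0 <= eps -> eps_solution f eps x -> eps_solution f eps z ->
  0 < t -> 0 < s -> z 0 = x t ->
  exists w, eps_solution f eps w /\ w 0 = x 0 /\ w (t + s) = z s.
Proof.
  intros Hf He [dx [Dx Bx]] [dz [Dz Bz]] Ht Hs Hz.
  destruct (classic (dx t = dz 0)) as [Ha|Ha].
  { eapply glue_eq; eauto. }
  set (p := x t). set (a := dx t). set (bb := dz 0).
  set (M := fun i => (a i + bb i) / 2).
  set (k := eps - vnorm (fun i => f p i - M i)).
  assert (Hk : 0 < k).
  { unfold k. pose proof (parallelogram n (fun i => f p i - a i) (fun i => f p i - bb i)) as P.
    assert (E1 : vnorm (fun i => (f p i - a i) + (f p i - bb i)) = 2 * vnorm (fun i => f p i - M i)).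
    { replace 2 with (Rabs 2) by (apply Rabs_pos_eq; lra). rewrite <- vnorm_scal. apply vnorm_ext; intro; unfold M; field. }
    assert (E2 : vnorm (fun i => (f p i - a i) - (f p i - bb i)) = vnorm (fun i => bb i - a i)) by (apply vnorm_ext; intro; ring).
    cbv beta in P. rewrite E1, E2 in P.
    assert (0 < vnorm (fun i => bb i - a i)) by (apply vnorm_pos_of_neq; auto).
    assert (Ba : vnorm (fun i => f p i - a i) <= eps) by (apply Bx; lra).
    assert (Bb : vnorm (fun i => f p i - bb i) <= eps) by (unfold bb, p; rewrite <- Hz; apply Bz; lra).
    pose proof (vnorm_nonneg _ (fun i => f p i - a i)). pose proof (vnorm_nonneg _ (fun i => f p i - bb i)).
    pose proof (vnorm_nonneg _ (fun i => f p i - M i)).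
    set (q := vnorm (fun i => f p i - M i)) in *.
    assert (4 * q^2 < 4 * eps^2) by nra.
    destruct (Rlt_or_le q eps). lra. nra. }
  destruct (f_lip n f p Hf) as [r [L [Hr [HL Lip]]]].
  set (r1 := Rmin r (k / (16 * (L + 1)))).
  assert (Hr1 : 0 < r1) by (apply Rmin_pos; auto; apply Rdiv_lt_0_compat; lra).
  assert (Hr1r : r1 <= r) by apply Rmin_l.
  assert (HLr : L * r1 <= k / 16).
  { assert (r1 <= k / (16 * (L+1))) by apply Rmin_r.
    assert (L * r1 <= L * (k / (16 * (L + 1)))) by (apply Rmult_le_compat_l; lra).
    assert (L * (k / (16 * (L + 1))) <= k / 16).
    { replace (L * (k / (16 * (L + 1)))) with ((k/16) * (L / (L+1))) by (field; lra).
      assert (L / (L+1) <= 1) by (apply div_le1; lra). nra. }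
    lra. }
  set (Mb := vnorm (f p) + L * r1 + 2 * eps).
  set (K := Mb * (1 + INR n)).
  assert (HMb0 : 0 <= Mb) by (unfold Mb; pose proof (vnorm_nonneg _ (f p)); nra).
  assert (HK0 : 0 <= K) by (unfold K; pose proof (pos_INR n); nra).
  set (beta := k / (8 * K + 1)).
  assert (Hbeta : 0 < beta) by (apply Rdiv_lt_0_compat; lra).
  assert (Hbeta2 : 2 * beta * K <= k / 4).
  { unfold beta. replace (2 * (k / (8 * K + 1)) * K) with ((k/4) * (8 * K / (8 * K + 1))) by (field; lra).
    assert (8 * K / (8 * K + 1) <= 1) by (apply div_le1; lra). nra. }
  set (e1 := r1 / (INR n + 1)).
  assert (He1 : 0 < e1) by (apply Rdiv_lt_0_compat; pose proof (pos_INR n); lra).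
  destruct (fin_choice_pos n (fun i eta => forall h, 0 <= h < eta -> Rabs (x (t - h) i - x t i) <= e1)) as [eA [HeA PA]].
  { intros i d0 d' Hd H h Hh. apply H. lra. }
  { intro i. apply (ld_cont (fun s => x s i) t (dx t i)). apply dpl_ld, dpl_of_dn. lra. apply Dx; lra. auto. }
  destruct (fin_choice_pos n (fun i eta => forall h, 0 <= h < eta -> Rabs (z (0 + h) i - z 0 i) <= e1)) as [eB [HeB PB]].
  { intros i d0 d' Hd H h Hh. apply H. lra. }
  { intro i. apply (rd_cont (fun s => z s i) 0 (dz 0 i)). apply rd_of_dn. lra. apply Dz; lra. auto. }
  set (e0 := k / (4 * (INR n + 1))).
  assert (He0 : 0 < e0) by (apply Rdiv_lt_0_compat; pose proof (pos_INR n); lra).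
  destruct (fin_choice_pos n (fun i eta => forall d, 0 < d < eta -> Rabs ((z d i - x (t - d) i) / (2 * d) - M i) <= e0)) as [eC [HeC PC]].
  { intros i d0 d' Hd H d Hdd. apply H. lra. }
  { intro i. assert (R1 : rd (fun s => z s i) 0 (dz 0 i)) by (apply rd_of_dn; [lra|apply Dz; lra]).
    assert (L1 : ld (fun s => x s i) t (dx t i)) by (apply dpl_ld, dpl_of_dn; [lra|apply Dx; lra]).
    destruct (R1 e0 He0) as [d1 [Hd1 P1]]. destruct (L1 e0 He0) as [d2 [Hd2 P2]].
    exists (Rmin d1 d2). split. apply Rmin_pos; auto. intros d Hd.
    pose proof (Rmin_l d1 d2); pose proof (Rmin_r d1 d2).
    specialize (P1 d ltac:(lra)). specialize (P2 (- d) ltac:(lra)).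
    replace (0 + d) with d in P1 by ring. replace (t + - d) with (t - d) in P2 by ring.
    replace ((z d i - x (t - d) i) / (2 * d) - M i) with (/2 * ((z d i - z 0 i) / d - dz 0 i) + /2 * ((x (t - d) i - x t i) / - d - dx t i)).
    2:{ unfold M, a, bb. rewrite Hz. field. lra. }
    eapply Rle_trans. apply Rabs_triang. rewrite !Rabs_mult, Rabs_pos_eq by lra. lra. }
  set (d := Rmin (Rmin eA eB) (Rmin eC (Rmin t s)) / 2).
  assert (Hd : 0 < d) by (unfold d; apply Rdiv_lt_0_compat; [repeat apply Rmin_pos; auto|lra]).
  assert (HdA : d < eA /\ d < eB /\ d < eC /\ d < t /\ d <= s).
  { unfold d. pose proof (Rmin_l (Rmin eA eB) (Rmin eC (Rmin t s))). pose proof (Rmin_r (Rmin eA eB) (Rmin eC (Rmin t s))).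
    pose proof (Rmin_l eA eB). pose proof (Rmin_r eA eB). pose proof (Rmin_l eC (Rmin t s)). pose proof (Rmin_r eC (Rmin t s)).
    pose proof (Rmin_l t s). pose proof (Rmin_r t s). lra. }
  set (m := fun i => (z d i - x (t - d) i) / (2 * d)).
  assert (Hm : vnorm (fun i => m i - M i) <= k / 4).
  { eapply Rle_trans. apply sum_small with (e := e0). lra. intro i. apply PC. lra. unfold e0.
    replace (k / (4 * (INR n + 1))) with ((k/4) / (INR n + 1)) by (field; pose proof (pos_INR n); lra). apply small_n. lra. }
  assert (LipF : forall q, vnorm (fun i => q i - p i) <= r1 -> vnorm (fun i => f q i - f p i) <= L * r1).
  { intros q Hq. assert (E0 : vnorm (fun i => p i - p i) = 0).
    { unfold vnorm. rewrite sum_fin_zero_ex. apply sqrt_0. intro; ring. }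
    eapply Rle_trans. apply Lip. lra. rewrite E0; lra. apply Rmult_le_compat_l; auto. }
  destruct (construct n f eps x dx z dz t d beta k L r1 Mb p m) as [w [Hw [Hw0 Hwt]]].
  - exact Dx.
  - intros u Hu. apply Bx; auto.
  - exact Dz.
  - intros u Hu. apply Bz; auto.
  - lra.
  - reflexivity.
  - exact Hz.
  - intro i. unfold m. field. lra.
  - exact HL.
  - intros u v Hu Hv. apply Lip; lra.
  - intros c Hc. eapply Rle_trans. apply sum_small with (e := e1). lra. intro i.
    replace c with (t - (t - c)) by ring. apply PA. lra. apply small_n. lra.
  - intros v Hv. eapply Rle_trans. apply sum_small with (e := e1). lra. intro i.
    unfold p. rewrite <- Hz. replace v with (0 + v) by ring. apply PB. lra. apply small_n. lra.
  - intros q Hq. assert (E : (fun i => f q i - m i) = (fun i => (fun i => (fun i => f q i - f p i) i + (fun i => f p i - M i) i) i + (fun i => M i - m i) i)).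
    { apply functional_extensionality; intro; ring. }
    rewrite E. eapply Rle_trans. apply vnorm_triang. eapply Rle_trans. apply Rplus_le_compat. apply vnorm_triang. right; reflexivity.
    rewrite (vnorm_sub_sym _ M). pose proof (LipF q Hq).
    assert (vnorm (fun i => f p i - M i) = eps - k) by (unfold k; ring). lra.
  - exact Hk.
  - lra.
  - intros q Hq. pose proof (LipF q Hq).
    assert (vnorm (f q) <= vnorm (f p) + vnorm (fun i => f q i - f p i)).
    { eapply Rle_trans; [|apply vnorm_triang]. right. apply vnorm_ext; intro; ring. }
    unfold Mb. lra.
  - assert (vnorm m <= vnorm M + vnorm (fun i => m i - M i)).
    { eapply Rle_trans; [|apply vnorm_triang]. right. apply vnorm_ext; intro; ring. }
    assert (vnorm M <= vnorm (f p) + vnorm (fun i => f p i - M i)).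
    { rewrite (vnorm_sub_sym _ (f p)). eapply Rle_trans; [|apply vnorm_triang]. right. apply vnorm_ext; intro; ring. }
    assert (vnorm (fun i => f p i - M i) = eps - k) by (unfold k; ring).
    unfold Mb. pose proof (vnorm_nonneg _ (f p)). assert (0 <= L * r1) by nra. lra.
  - exact Hbeta.
  - fold K. lra.
  - exists w. split; auto. split; auto. rewrite Hwt. f_equal; ring. lra.
Qed.

Lemma shift_sol n (f : vec n -> vec n) eps (w : R -> vec n) c : 0 <= c -> eps_solution f eps w ->
  eps_solution f eps (fun u => w (u + c)).
Proof. intros Hc [dw [Dw Bw]]. exists (fun u => dw (u + c)). split.
  - intros u Hu i e He. destruct (Dw (u + c) ltac:(lra) i e He) as [d [Hd P]]. exists d. split; auto.
    intros h Hh H0 Ha. replace (u + h + c) with (u + c + h) by ring. apply P; auto. lra.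
  - intros u Hu. apply Bw. lra. Qed.

Lemma floor_ex D T : 0 < D -> 0 <= T -> exists k : nat, INR k * D <= T < INR (S k) * D.
Proof. intros HD HT. destruct (INR_archimed D T HD) as [N HN].
  assert (G : forall N, T < INR N * D -> exists k : nat, INR k * D <= T < INR (S k) * D).
  { induction N0; intro H. simpl in H. lra.
    destruct (Rlt_or_le T (INR N0 * D)). apply IHN0; auto. exists N0. split; auto. }
  apply (G N). lra. Qed.

Theorem lemma6 (n : nat) (f : vec n -> vec n) (eps : R) (V : vec n -> Prop) (Delta : R) :
  smooth f -> 0 <= eps -> 0 < Delta ->
  (forall y, Reach f eps (fun t => t = Delta) V y -> V y) ->
  forall Delta', Delta <= Delta' ->
  forall y, Reach f eps (fun _ => True) (Reach f eps (fun t => 0 <= t <= Delta') V) y ->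
            Reach f eps (fun t => 0 <= t <= Delta') V y.
Proof.
  intros Hf He HD Hinv D' HDD y [z [s [Hs [_ [Zs [[x [t [Ht [Htd [Xs [XV Ezx]]]]]] Ey]]]]]].
  assert (W : exists w T, eps_solution f eps w /\ V (w 0) /\ 0 <= T /\ y = w T).
  { destruct (Req_dec t 0) as [E|E].
    - subst t. exists z, s. rewrite Ezx. auto.
    - destruct (Req_dec s 0) as [E2|E2].
      + subst s. exists x, t. rewrite Ey, Ezx. auto.
      + destruct (glue n f eps x z t s) as [w [Ws [W0 WT]]]; auto; try lra.
        exists w, (t + s). rewrite W0, Ey, <- WT. repeat split; auto. lra. }
  destruct W as [w [T [Ws [W0 [HT Ey2]]]]].
  assert (Vk : forall k : nat, V (w (INR k * Delta))).
  { induction k. simpl. replace (0 * Delta) with 0 by ring. auto.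
    apply Hinv. exists (fun u => w (u + INR k * Delta)), Delta. repeat split; auto. lra.
    apply shift_sol; auto. pose proof (pos_INR k); nra. replace (0 + INR k * Delta) with (INR k * Delta) by ring. auto.
    rewrite S_INR. f_equal. ring. }
  destruct (floor_ex Delta T HD HT) as [k [Hk1 Hk2]]. rewrite S_INR in Hk2.
  exists (fun u => w (u + INR k * Delta)), (T - INR k * Delta). repeat split; try lra.
  apply shift_sol; auto. pose proof (pos_INR k); nra. replace (0 + INR k * Delta) with (INR k * Delta) by ring. auto.
  rewrite Ey2. f_equal. ring.
Qed.
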